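(* Let $X$ be a Tychonoff space. The following are equivalent: (1) $C_p(X)$ is strictly H-bounded; (2) $C_p(X)$ is H-bounded; (3) $C_p(X)$ is strictly M-bounded; (4) $C_p(X)$ is M-bounded; (5) $X$ is pseudocompact; (6) $C_m(X)$ is first countable; (7) $C_m(X)$ is strictly Fréchet–Urysohn; (8) $C_m(X)$ has countable strong fan tightness; (9) $C_m(X)$ has countable fan tightness; (10) $C_m(X)$ has countable tightness; (11) $C_m(X)$ is completely metrizable; (12) $C_m(X)$ is Čech-complete; (13) $C_m(X)$ is hereditarily Baire.
   Context: $C(X)$ is the set of continuous real-valued functions on a Tychonoff space $X$, regarded as a Hausdorff topological group under pointwise addition with identity the constant zero function $f_0$. $C_p(X)$ is $C(X)$ with the topology of pointwise convergence (basic neighborhoods of $f$: $\{g:|g(x)-f(x)|<\varepsilon \ \forall x\in F\}$, $F\subset X$ finite, $\varepsilon>0$). $C_m(X)$ is $C(X)$ with the $m$-topology (fine/Whitney topology): basic neighborhoods of $f$ are $\{g\in C(X): |g(x)-f(x)|<\varepsilon(x)\ \forall x\in X\}$ where $\varepsilon\in C(X)$ is strictly positive. For a topological group $G$ with identity $e$: $G$ is M-bounded (Menger-bounded) if for every sequence $(U_n)_{n\in\mathbb N}$ of neighborhoods of $e$ there are finite sets $A_n\subset G$ with $G=\bigcup_n A_n\cdot U_n$; $G$ is H-bounded (Hurewicz-bounded) if for every such sequence there are finite $A_n\subset G$ such that each $x\in G$ belongs to $A_n\cdot U_n$ for all but finitely many $n$. The M-game on $G$: in round $n$ player ONE chooses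 a (basic) neighborhood $U_n$ of $e$ and TWO responds with a finite set $A_n\subset G$; TWO wins if $G=\bigcup_n A_nU_n$. $G$ is strictly M-bounded if TWO has a winning strategy in this game. Strictly H-bounded is defined analogously, TWO winning when each $x\in G$ lies in all but finitely many $A_nU_n$. A space $Y$ has countable tightness if whenever $y\in\overline{A}$ there is countable $B\subset A$ with $y\in\overline B$; countable fan tightness if for every $y$ and every sequence $(A_n)$ with $y\in\bigcap_n\overline{A_n}$ there are finite $B_n\subset A_n$ with $y\in\overline{\bigcup_n B_n}$; countable strong fan tightness if in the same situation there are points $b_n\in A_n$ with $y\in\overline{\{b_n:n\in\mathbb N\}}$; $Y$ is strictly Fréchet–Urysohn if for every $y$ and every sequence $(A_n)$ with $y\in\bigcap_n \overline{A_n}$ there are $a_n\in A_n$ with $a_n\to y$. Hereditarily Baire means every closed subspace is a Baire space. *)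

(* Defs.v *)
From Stdlib Require Import Reals List.
Open Scope R_scope.

Record TopSpace := mkTop {
  pt :> Type;
  isopen : (pt -> Prop) -> Prop;
  open_full : isopen (fun _ => True);
  open_inter : forall U V, isopen U -> isopen V -> isopen (fun x => U x /\ V x);
  open_union : forall F : (pt -> Prop) -> Prop,
      (forall U, F U -> isopen U) -> isopen (fun x => exists U, F U /\ U x)
}.

Definition rcontinuous (X : TopSpace) (f : X -> R) : Prop :=
  forall x eps, 0 < eps ->
    exists U, isopen X U /\ U x /\ forall y, U y -> Rabs (f y - f x) < eps.

Definition closed_in (X : TopSpace) (F : X -> Prop) : Prop :=
  isopen X (fun x => ~ F x).

Definition tychonoff (X : TopSpace) : Prop :=
  (forall x y : X, x <> y -> exists U, isopen X U /\ U x /\ ~ U y) /\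
  (forall (F : X -> Prop) (x : X), closed_in X F -> ~ F x ->
     exists f : X -> R, rcontinuous X f /\ f x = 0 /\ forall y, F y -> f y = 1).

Definition pseudocompact (X : TopSpace) : Prop :=
  forall f : X -> R, rcontinuous X f -> exists M, forall x, Rabs (f x) <= M.

Definition CX (X : TopSpace) : Type := { f : X -> R | rcontinuous X f }.

Definition ev {X : TopSpace} (g : CX X) (x : X) : R := proj1_sig g x.

Lemma const0_cont (X : TopSpace) : rcontinuous X (fun _ => 0).
Proof.
  intros x eps He. exists (fun _ => True). split; [apply open_full|split; [exact I|]].
  intros y _. unfold Rminus. rewrite Rplus_opp_r, Rabs_R0. exact He.
Qed.

Definition f0 (X : TopSpace) : CX X := exist _ (fun _ => 0) (const0_cont X).

Definition Cp_open (X : TopSpace) (O : CX X -> Prop) : Prop :=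
  forall f, O f -> exists (F : list X) (eps : R), 0 < eps /\
    forall g : CX X, (forall x, In x F -> Rabs (ev g x - ev f x) < eps) -> O g.

Definition Cm_open (X : TopSpace) (O : CX X -> Prop) : Prop :=
  forall f, O f -> exists e : CX X, (forall x, 0 < ev e x) /\
    forall g : CX X, (forall x, Rabs (ev g x - ev f x) < ev e x) -> O g.

Definition nbhd0 (X : TopSpace) (op : (CX X -> Prop) -> Prop) (N : CX X -> Prop) : Prop :=
  exists O, op O /\ O (f0 X) /\ forall g, O g -> N g.

Definition plusset (X : TopSpace) (A : list (CX X)) (U : CX X -> Prop) (g : CX X) : Prop :=
  exists a, In a A /\ exists u, U u /\ forall x, ev g x = ev a x + ev u x.

Definition Mbounded (X : TopSpace) (op : (CX X -> Prop) -> Prop) : Prop :=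
  forall U : nat -> (CX X -> Prop), (forall n, nbhd0 X op (U n)) ->
    exists A : nat -> list (CX X), forall g, exists n, plusset X (A n) (U n) g.

Definition Hbounded (X : TopSpace) (op : (CX X -> Prop) -> Prop) : Prop :=
  forall U : nat -> (CX X -> Prop), (forall n, nbhd0 X op (U n)) ->
    exists A : nat -> list (CX X), forall g, exists N, forall n, (N <= n)%nat ->
      plusset X (A n) (U n) g.

(* A strategy of TWO: maps the list of ONE's moves so far (U_0,...,U_n) to A_n. *)
Definition history {T : Type} (U : nat -> T) (n : nat) : list T := map U (seq 0 (S n)).

Definition strictly_Mbounded (X : TopSpace) (op : (CX X -> Prop) -> Prop) : Prop :=
  exists sigma : list (CX X -> Prop) -> list (CX X),
    forall U : nat -> (CX X -> Prop), (forall n, nbhd0 X op (U n)) ->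
      forall g, exists n, plusset X (sigma (history U n)) (U n) g.

Definition strictly_Hbounded (X : TopSpace) (op : (CX X -> Prop) -> Prop) : Prop :=
  exists sigma : list (CX X -> Prop) -> list (CX X),
    forall U : nat -> (CX X -> Prop), (forall n, nbhd0 X op (U n)) ->
      forall g, exists N, forall n, (N <= n)%nat ->
        plusset X (sigma (history U n)) (U n) g.

Section Gen.
Variable T : Type.
Variable op : (T -> Prop) -> Prop.

Definition closure (A : T -> Prop) (y : T) : Prop :=
  forall U, op U -> U y -> exists a, A a /\ U a.

Definition first_countable : Prop :=
  forall y, exists B : nat -> (T -> Prop), (forall n, op (B n) /\ B n y) /\
    forall U, op U -> U y -> exists n, forall t, B n t -> U t.

Definition countable_set (B : T -> Prop) : Prop :=
  exists s : nat -> T, forall b, B b -> exists n, s n = b.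

Definition countable_tightness : Prop :=
  forall (A : T -> Prop) y, closure A y ->
    exists B, (forall b, B b -> A b) /\ countable_set B /\ closure B y.

Definition countable_fan_tightness : Prop :=
  forall (A : nat -> T -> Prop) y, (forall n, closure (A n) y) ->
    exists B : nat -> list T, (forall n b, In b (B n) -> A n b) /\
      closure (fun t => exists n, In t (B n)) y.

Definition countable_strong_fan_tightness : Prop :=
  forall (A : nat -> T -> Prop) y, (forall n, closure (A n) y) ->
    exists b : nat -> T, (forall n, A n (b n)) /\ closure (fun t => exists n, b n = t) y.

Definition converges (a : nat -> T) (y : T) : Prop :=
  forall U, op U -> U y -> exists N, forall n, (N <= n)%nat -> U (a n).

Definition strictly_Frechet_Urysohn : Prop :=
  forall (A : nat -> T -> Prop) y, (forall n, closure (A n) y) ->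
    exists a : nat -> T, (forall n, A n (a n)) /\ converges a y.

Definition completely_metrizable : Prop :=
  exists d : T -> T -> R,
    (forall x y, 0 <= d x y) /\ (forall x y, d x y = 0 <-> x = y) /\
    (forall x y, d x y = d y x) /\ (forall x y z, d x z <= d x y + d y z) /\
    (forall U, op U <-> forall x, U x -> exists r, 0 < r /\ forall y, d x y < r -> U y) /\
    (forall s : nat -> T,
       (forall eps, 0 < eps -> exists N, forall m n, (N <= m)%nat -> (N <= n)%nat ->
           d (s m) (s n) < eps) ->
       exists l, forall eps, 0 < eps -> exists N, forall n, (N <= n)%nat -> d (s n) l < eps).

Definition dense_in (F W : T -> Prop) : Prop :=
  forall O, op O -> (exists t, F t /\ O t) -> exists t, F t /\ O t /\ W t.

Definition hereditarily_Baire : Prop :=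
  forall F : T -> Prop, op (fun t => ~ F t) ->
    forall W : nat -> (T -> Prop), (forall n, op (W n)) -> (forall n, dense_in F (W n)) ->
      dense_in F (fun t => forall n, W n t).
End Gen.

Definition compact (K : TopSpace) : Prop :=
  forall Fam : (K -> Prop) -> Prop, (forall U, Fam U -> isopen K U) ->
    (forall k, exists U, Fam U /\ U k) ->
    exists l : list (K -> Prop), (forall U, In U l -> Fam U) /\ forall k, exists U, In U l /\ U k.

Definition hausdorff (K : TopSpace) : Prop :=
  forall x y : K, x <> y -> exists U V, isopen K U /\ isopen K V /\ U x /\ V y /\
    forall z, ~ (U z /\ V z).

(* Čech-complete: G_delta in some Hausdorff compactification *)
Definition Cech_complete (T : Type) (op : (T -> Prop) -> Prop) : Prop :=
  exists (K : TopSpace) (e : T -> K),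
    compact K /\ hausdorff K /\
    (forall t1 t2, e t1 = e t2 -> t1 = t2) /\
    (forall W, isopen K W -> op (fun t => W (e t))) /\
    (forall O, op O -> exists W, isopen K W /\ forall t, O t <-> W (e t)) /\
    (forall W, isopen K W -> (exists k, W k) -> exists t, W (e t)) /\
    exists Wn : nat -> (K -> Prop), (forall n, isopen K (Wn n)) /\
      forall k, (forall n, Wn n k) <-> exists t, e t = k.

(* Main.v *)
From Stdlib Require Import Reals Lra.
Module CubeM.
From HB Require Import structures.
From mathcomp Require Import all_boot all_order all_algebra.
From mathcomp Require Import all_classical all_reals all_analysis.
From mathcomp Require Import Rstruct Rstruct_topology.
From Stdlib Require Import Reals.
From Stdlib Require List Classical.
Import Order.TTheory GRing.Theory Num.Theory.
Local Open Scope classical_set_scope.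
Local Open Scope ring_scope.

Definition Pt (I : Type) := prod_topology (fun _ : {classic I} => R).
HB.instance Definition _ (I : Type) := Topological.on (Pt I).
HB.instance Definition _ (I : Type) := isPointed.Build (Pt I) (fun _ => 0%R).
Section Cube.
Variable I : Type.
Let J := {classic I}.
Let P := Pt I.

Definition boxset (y : P) (l : list I) (eps : R) : set P :=
  [set z : P | forall i, List.In i l -> `|z i - y i| < eps].

Lemma boxset_open y l eps : open (boxset y l eps).
Proof.
elim: l => [|i l IH].
  rewrite (_ : boxset y [::] eps = setT); first exact: openT.
  by apply/seteqP; split => z //= _ i [].
rewrite (_ : boxset y (i :: l) eps =
   ((@proj J (fun _ => R) i) @^-1` (ball (y i) eps)) `&` boxset y l eps).
  apply: openI => //; apply: open_comp; last exact: (@ball_open R R^o).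
  move=> z _; exact: proj_continuous.
apply/seteqP; split => z /=.
  move=> H; split; last by move=> j Hj; apply: H; right.
  by rewrite /ball /= distrC; apply: H; left.
move=> [H1 H2] j [<-|Hj]; last exact: H2.
by move: H1; rewrite /ball /= distrC.
Qed.


Lemma In_mem (T : eqType) (x : T) (s : list T) : List.In x s <-> x \in s.
Proof.
elim: s => [|a s IH] //=; rewrite in_cons; split.
  by move=> [->|/IH ->]; rewrite ?eqxx ?orbT.
by case/orP => [/eqP ->|/IH]; [left|right].
Qed.

Lemma cube_compact (S : (I -> R) -> Prop) :
 (forall y, S y -> forall i, Rle 0 (y i) /\ Rle (y i) 1) ->
 (forall y, (forall (l : list I) (eps : R), Rlt 0 eps ->
      exists z, S z /\ forall i, List.In i l -> Rlt (Rabs (Rminus (z i) (y i))) eps) -> S y) ->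
 forall Fam : ((I -> R) -> Prop) -> Prop,
 (forall U, Fam U -> forall y, S y -> U y -> exists l eps, Rlt 0 eps /\
     forall z, S z -> (forall i, List.In i l -> Rlt (Rabs (Rminus (z i) (y i))) eps) -> U z) ->
 (forall y, S y -> exists U, Fam U /\ U y) ->
 exists L, (forall U, List.In U L -> Fam U) /\ forall y, S y -> exists U, List.In U L /\ U y.
Proof.
move=> Sb Scl Fam Fop Fcov.
have cubeC : compact.compact [set f : P | forall i, `[0%R, 1%R]%classic (f i)].
  exact: (@tychonoff J (fun _ => R) (fun _ => `[0%R, 1%R]%classic) (fun _ => @segment_compact R 0%R 1%R)).
have Sclo : closed (S : set P).
  rewrite -[S : set P]setCK; apply: open_closedC; rewrite openE => y nSy.
  have [l [eps [eps0 Hl]]] : exists l eps, (0 < eps)%R /\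
      forall z, S z -> ~ (forall i, List.In i l -> (Rabs (z i - y i) < eps)%R).
    apply: Classical_Prop.NNPP => H; apply: nSy; apply: Scl => l eps e0.
    apply: Classical_Prop.NNPP => H2; apply: H; exists l, eps; split => // z Sz Hz.
    by apply: H2; exists z.
  apply: (@filterS _ _ _ (boxset y l eps)).
    by move=> z Hz Sz; apply: (Hl z Sz) => i Hi; apply/RltP; apply: Hz.
  apply: open_nbhs_nbhs; split; first exact: boxset_open.
  by move=> i _; rewrite subrr normr0; apply/RltP.
have Sco : compact.compact (S : set P).
  apply: subclosed_compact Sclo cubeC _ => y Sy i.
  by have [h1 h2] := Sb y Sy i; move/RleP: h1 => h1; move/RleP: h2 => h2; rewrite /= in_itv /= h1 h2.
move: Sco; rewrite (@compact_cover P) => Sco.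
pose K := {classic (set P)}.
pose G (U : K) : set P := [set z | exists (k : P) l eps, U k /\ S k /\ (0 < eps)%R /\
   (forall k', S k' -> (forall i, List.In i l -> (Rabs (k' i - k i) < eps)%R) -> U k') /\
   boxset k l eps z].
have Gop : forall U : K, [set U | Fam U] U -> open (G U).
  move=> U _; rewrite openE => z [k [l [eps [Uk [Sk [e0 [Hw Hb]]]]]]].
  have : open (boxset k l eps) := boxset_open k l eps.
  rewrite openE => /(_ z Hb); apply: filterS => w Hw'.
  by exists k, l, eps.
have Scov : (S : set P) `<=` cover [set U : K | Fam U] G.
  move=> y Sy; have [U [FU Uy]] := Fcov y Sy.
  exists U => //.
  have [l [eps [e0 Hl]]] := Fop U FU y Sy Uy.
  exists y, l, eps; do 4 (split => //).
  by move=> i _; rewrite subrr normr0; apply/RltP.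
have [D' sD Dcov] := Sco K [set U : K | Fam U] G Gop Scov.
exists (finmap.enum_fset D'); split.
  move=> U HU. have HU' := (proj1 (@In_mem K U _) HU). have := sD U HU'. by rewrite inE.
move=> y Sy; have [U HU Gy] := Dcov y Sy.
exists U; split; first by apply/(@In_mem K U _).
move: Gy => [k [l [eps [Uk [Sk [e0 [Hw Hb]]]]]]].
by apply: Hw => // i Hi; apply/RltP; apply: Hb.
Qed.
End Cube.

End CubeM.

Require Import Defs.
From Stdlib Require Import ZifyInst Lra Lia ZArith List Classical ClassicalEpsilon FunctionalExtensionality ProofIrrelevance PropExtensionality Cantor.
Open Scope R_scope.
(* restore the Stdlib meaning of the nat notations (overridden by mathcomp) *)
Notation "x + y" := (Nat.add x y) : nat_scope.
Notation "x - y" := (Nat.sub x y) : nat_scope.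
Notation "x * y" := (Nat.mul x y) : nat_scope.
Notation "x <= y" := (le x y) : nat_scope.
Notation "x < y" := (lt x y) : nat_scope.
Notation "x >= y" := (ge x y) : nat_scope.
Notation "x > y" := (gt x y) : nat_scope.

Lemma cpt_Rc (h : R -> R) (t : R) : continuity_pt h t ->
  forall eps, 0 < eps -> exists d, 0 < d /\ forall s, Rabs (s - t) < d -> Rabs (h s - h t) < eps.
Proof.
  intros H eps He. destruct (H eps He) as [a [Ha Hs]]. exists a. split; [exact Ha|].
  intros s Hs'. destruct (Req_dec s t) as [->|Hne].
  - unfold Rminus. rewrite Rplus_opp_r, Rabs_R0. exact He.
  - apply (Hs s). split; [split; [exact I| congruence]| exact Hs'].
Qed.

Section Basic.
Variable X : TopSpace.

Lemma rcont_comp (f : X -> R) (h : R -> R) : rcontinuous X f ->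
  (forall x, continuity_pt h (f x)) -> rcontinuous X (fun x => h (f x)).
Proof.
  intros Hf Hh x eps He. destruct (cpt_Rc h (f x) (Hh x) eps He) as [d [Hd Hs]].
  destruct (Hf x d Hd) as [U [HU [HUx HUy]]]. exists U. split; [exact HU|split; [exact HUx|]].
  intros y Hy. apply Hs. apply HUy. exact Hy.
Qed.

Lemma rcont_plus (f g : X -> R) : rcontinuous X f -> rcontinuous X g -> rcontinuous X (fun x => f x + g x).
Proof.
  intros Hf Hg x eps He.
  destruct (Hf x (eps/2)) as [U [HU [HUx HUy]]]; [lra|].
  destruct (Hg x (eps/2)) as [V [HV [HVx HVy]]]; [lra|].
  exists (fun y => U y /\ V y). split; [apply open_inter; assumption|split; [tauto|]].
  intros y [Hy1 Hy2]. specialize (HUy y Hy1). specialize (HVy y Hy2).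
  replace (f y + g y - (f x + g x)) with ((f y - f x) + (g y - g x)) by ring.
  eapply Rle_lt_trans; [apply Rabs_triang|]. lra.
Qed.

Lemma rcont_const (c : R) : rcontinuous X (fun _ => c).
Proof.
  intros x eps He. exists (fun _ => True). split; [apply open_full|split; [exact I|]].
  intros y _. unfold Rminus. rewrite Rplus_opp_r, Rabs_R0. exact He.
Qed.

Lemma rcont_scal (c : R) (f : X -> R) : rcontinuous X f -> rcontinuous X (fun x => c * f x).
Proof.
  intros Hf. apply (rcont_comp f (fun t => c * t)); [exact Hf|].
  intros x. apply continuity_pt_scal. apply derivable_continuous_pt. apply derivable_pt_id.
Qed.

Lemma rcont_minus (f g : X -> R) : rcontinuous X f -> rcontinuous X g -> rcontinuous X (fun x => f x - g x).
Proof.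
  intros Hf Hg. assert (H := rcont_plus f (fun x => -1 * g x) Hf (rcont_scal (-1) g Hg)).
  intros x eps He. destruct (H x eps He) as [U HU]. exists U.
  assert (E : forall y, f y + -1 * g y = f y - g y) by (intros; ring).
  rewrite !E in HU. setoid_rewrite E in HU. exact HU.
Qed.

Lemma rcont_abs (f : X -> R) : rcontinuous X f -> rcontinuous X (fun x => Rabs (f x)).
Proof.
  intros Hf. apply (rcont_comp f Rabs); [exact Hf|]. intros x. apply Rcontinuity_abs.
Qed.

Lemma rcont_sq (f : X -> R) : rcontinuous X f -> rcontinuous X (fun x => f x * f x).
Proof.
  intros Hf. apply (rcont_comp f (fun t => t * t)); [exact Hf|].
  intros x. apply continuity_pt_mult; apply derivable_continuous_pt; apply derivable_pt_id.
Qed.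

Lemma rcont_mult (f g : X -> R) : rcontinuous X f -> rcontinuous X g -> rcontinuous X (fun x => f x * g x).
Proof.
  intros Hf Hg.
  assert (H := rcont_scal (/4) _ (rcont_minus _ _ (rcont_sq _ (rcont_plus f g Hf Hg))
                                      (rcont_sq _ (rcont_minus f g Hf Hg)))).
  assert (E : forall y, /4 * ((f y + g y) * (f y + g y) - (f y - g y) * (f y - g y)) = f y * g y)
    by (intros; field).
  intros x eps He. destruct (H x eps He) as [U HU]. exists U. setoid_rewrite E in HU. exact HU.
Qed.

Lemma rcont_min (f g : X -> R) : rcontinuous X f -> rcontinuous X g -> rcontinuous X (fun x => Rmin (f x) (g x)).
Proof.
  intros Hf Hg.
  assert (H := rcont_scal (/2) _ (rcont_minus _ _ (rcont_plus f g Hf Hg) (rcont_abs _ (rcont_minus f g Hf Hg)))).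
  assert (E : forall y, /2 * (f y + g y - Rabs (f y - g y)) = Rmin (f y) (g y)).
  { intros y. unfold Rmin. destruct (Rle_dec (f y) (g y)).
    - rewrite Rabs_left1 by lra. field.
    - rewrite Rabs_right by lra. field. }
  intros x eps He. destruct (H x eps He) as [U HU]. exists U. setoid_rewrite E in HU. exact HU.
Qed.

Lemma rcont_inv (f : X -> R) : rcontinuous X f -> (forall x, f x <> 0) -> rcontinuous X (fun x => / f x).
Proof.
  intros Hf Hnz x eps He.
  destruct (Hf x (Rabs (f x) / 2)) as [U [HU [HUx HUy]]].
  { assert (0 < Rabs (f x)) by (apply Rabs_pos_lt; auto). lra. }
  assert (Hc : continuity_pt (fun t => / t) (f x)).
  { apply (continuity_pt_inv (fun t => t)). apply derivable_continuous_pt. apply derivable_pt_id. apply Hnz. }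
  destruct (cpt_Rc _ _ Hc eps He) as [d [Hd Hs]].
  destruct (Hf x d Hd) as [V [HV [HVx HVy]]].
  exists V. split; [exact HV|split; [exact HVx|]]. intros y Hy. apply Hs. apply HVy. exact Hy.
Qed.

Definition mkC (f : X -> R) (H : rcontinuous X f) : CX X := exist _ f H.

Lemma ev_mkC f H x : ev (mkC f H) x = f x.
Proof. reflexivity. Qed.

Lemma ev_cont (g : CX X) : rcontinuous X (ev g).
Proof. destruct g as [g Hg]. exact Hg. Qed.

Lemma CX_ext (g h : CX X) : (forall x, ev g x = ev h x) -> g = h.
Proof.
  destruct g as [g Hg], h as [h Hh]. unfold ev; simpl. intros E.
  assert (g = h) by (apply functional_extensionality; exact E). subst h.
  f_equal. apply proof_irrelevance.
Qed.

Definition cadd (g h : CX X) : CX X := mkC _ (rcont_plus _ _ (ev_cont g) (ev_cont h)).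
Definition csub (g h : CX X) : CX X := mkC _ (rcont_minus _ _ (ev_cont g) (ev_cont h)).
Definition cconst (c : R) : CX X := mkC _ (rcont_const c).

End Basic.
Arguments rcont_comp {X}. Arguments rcont_plus {X}. Arguments rcont_const {X}.
Arguments rcont_scal {X}. Arguments rcont_minus {X}. Arguments rcont_abs {X}.
Arguments rcont_sq {X}. Arguments rcont_mult {X}. Arguments rcont_min {X}.
Arguments rcont_inv {X}. Arguments ev_cont {X}. Arguments CX_ext {X}.

Lemma cont_min (f g : R -> R) x : continuity_pt f x -> continuity_pt g x ->
  continuity_pt (fun s => Rmin (f s) (g s)) x.
Proof.
  intros Hf Hg.
  apply (continuity_pt_locally_ext (fun s => /2 * (f s + g s - Rabs (f s - g s))) _ 1); [lra| |].
  - intros y _. unfold Rmin. destruct (Rle_dec (f y) (g y)).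
    + rewrite Rabs_left1 by lra. field.
    + rewrite Rabs_right by lra. field.
  - apply (continuity_pt_scal (fun s => f s + g s - Rabs (f s - g s))).
    apply (continuity_pt_minus (fun s => f s + g s) (fun s => Rabs (f s - g s))).
    + apply continuity_pt_plus; assumption.
    + apply (continuity_pt_comp (fun s => f s - g s) Rabs).
      * apply continuity_pt_minus; assumption.
      * apply Rcontinuity_abs.
Qed.

Section ToolT.
Variables (c t : nat -> R).
Hypothesis cpos : forall k, 0 < c k.
Hypothesis tbig : forall k, INR k <= t k.

Fixpoint psi (M : nat) (s : R) : R :=
  match M with
  | O => Rmin 1 (c 0 + Rabs (s - t 0))
  | S M' => Rmin (psi M' s) (c (S M') + Rabs (s - t (S M')))
  end.

Lemma psi_pos M s : 0 < psi M s.
Proof.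
  induction M; simpl.
  - apply Rmin_glb_lt; [lra|]. specialize (cpos 0). assert (0 <= Rabs (s - t 0)) by apply Rabs_pos. lra.
  - apply Rmin_glb_lt; [exact IHM|]. specialize (cpos (S M)). assert (0 <= Rabs (s - t (S M))) by apply Rabs_pos. lra.
Qed.

Lemma psi_le1 M s : psi M s <= 1.
Proof.
  induction M; simpl.
  - apply Rmin_l.
  - eapply Rle_trans; [apply Rmin_l|exact IHM].
Qed.

Lemma psi_le_k M s k : le k M -> psi M s <= c k + Rabs (s - t k).
Proof.
  induction M; intros Hk.
  - assert (k = 0%nat) by lia. subst. simpl. apply Rmin_r.
  - destruct (Nat.eq_dec k (S M)) as [->|Hne].
    + simpl. apply Rmin_r.
    + simpl. eapply Rle_trans; [apply Rmin_l|]. apply IHM. lia.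
Qed.

Lemma psi_cont M s : continuity_pt (psi M) s.
Proof.
  induction M; simpl.
  - apply (cont_min (fun _ => 1) (fun s => c 0 + Rabs (s - t 0))).
    + apply continuity_pt_const. intros a b; reflexivity.
    + apply continuity_pt_plus. apply continuity_pt_const. intros a b; reflexivity.
      apply (continuity_pt_comp (fun s => s - t 0) Rabs).
      * apply continuity_pt_minus. apply derivable_continuous_pt, derivable_pt_id.
        apply continuity_pt_const. intros a b; reflexivity.
      * apply Rcontinuity_abs.
  - apply (cont_min (psi M) (fun s => c (S M) + Rabs (s - t (S M)))).
    + exact IHM.
    + apply continuity_pt_plus. apply continuity_pt_const. intros a b; reflexivity.
      apply (continuity_pt_comp (fun s => s - t (S M)) Rabs).
      * apply continuity_pt_minus. apply derivable_continuous_pt, derivable_pt_id.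
        apply continuity_pt_const. intros a b; reflexivity.
      * apply Rcontinuity_abs.
Qed.

Lemma psi_stable M s : INR (S M) > s + 1 -> psi (S M) s = psi M s.
Proof.
  intros H. simpl. apply Rmin_left.
  assert (H1 := psi_le1 M s). specialize (tbig (S M)). specialize (cpos (S M)).
  assert (t (S M) - s <= Rabs (s - t (S M))).
  { rewrite Rabs_minus_sym. apply Rle_abs. }
  lra.
Qed.

Lemma psi_stable_plus M j s : INR (S M) > s + 1 -> psi (M + j) s = psi M s.
Proof.
  intros H. induction j.
  - rewrite Nat.add_0_r. reflexivity.
  - rewrite Nat.add_succ_r. rewrite psi_stable. exact IHj.
    assert (INR (S M) <= INR (S (M + j))) by (apply le_INR; lia). lra.
Qed.

Lemma psi_eq M1 M2 s : INR (S M1) > s + 1 -> INR (S M2) > s + 1 -> psi M1 s = psi M2 s.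
Proof.
  intros H1 H2. destruct (Nat.le_ge_cases M1 M2) as [Hle|Hle].
  - replace M2 with (Nat.add M1 (Nat.sub M2 M1)) by lia. rewrite psi_stable_plus; auto.
  - replace M1 with (Nat.add M2 (Nat.sub M1 M2)) by lia. rewrite psi_stable_plus; auto.
Qed.

Definition Nof (s : R) : nat := Nat.add (Z.to_nat (up (Rabs s))) 1.

Lemma Nof_spec s : INR (Nof s) > Rabs s + 1.
Proof.
  unfold Nof. rewrite plus_INR. simpl INR.
  destruct (archimed (Rabs s)) as [H1 H2].
  assert (Hz : (0 <= up (Rabs s))%Z).
  { apply le_IZR. assert (0 <= Rabs s) by apply Rabs_pos. simpl. lra. }
  rewrite INR_IZR_INZ. rewrite Z2Nat.id by exact Hz. lra.
Qed.

Definition hT (s : R) : R := psi (Nof s) s.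

Lemma hT_pos s : 0 < hT s.
Proof. apply psi_pos. Qed.

Lemma hT_le k : hT (t k) <= c k.
Proof.
  unfold hT. assert (H := Nof_spec (t k)). specialize (tbig k).
  assert (Hk : le k (Nof (t k))).
  { apply INR_le. assert (t k <= Rabs (t k)) by apply Rle_abs. lra. }
  eapply Rle_trans; [apply psi_le_k; exact Hk|].
  unfold Rminus. rewrite Rplus_opp_r, Rabs_R0. lra.
Qed.

Lemma hT_cont s0 : continuity_pt hT s0.
Proof.
  apply (continuity_pt_locally_ext (psi (Nof s0 + 2)) _ 1); [lra| |apply psi_cont].
  intros y Hy. unfold hT. apply psi_eq.
  - rewrite S_INR, plus_INR. simpl INR. assert (H := Nof_spec s0).
    unfold Rdist in Hy. assert (y - s0 <= Rabs (y - s0)) by apply Rle_abs.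
    assert (s0 <= Rabs s0) by apply Rle_abs. lra.
  - rewrite S_INR. assert (H := Nof_spec y). assert (y <= Rabs y) by apply Rle_abs. lra.
Qed.

End ToolT.

Lemma toolT (c t : nat -> R) : (forall k, 0 < c k) -> (forall k, INR k <= t k) ->
  exists h : R -> R, (forall s, continuity_pt h s) /\ (forall s, 0 < h s) /\ (forall k, h (t k) <= c k).
Proof.
  intros Hc Ht. exists (hT c t). split; [|split].
  - intros s. apply hT_cont; assumption.
  - intros s. apply hT_pos; assumption.
  - intros k. apply hT_le; assumption.
Qed.

Section Neg.
Variable X : TopSpace.

Lemma exists_nat_ge (r : R) : exists N : nat, r <= INR N.
Proof.
  exists (Nof r). assert (H := Nof_spec r). assert (r <= Rabs r) by apply Rle_abs. lra.
Qed.

Lemma unbounded_f : ~ pseudocompact X ->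
  exists f : X -> R, rcontinuous X f /\ (forall x, 0 <= f x) /\ forall k : nat, exists x, INR k <= f x.
Proof.
  intros Hn. unfold pseudocompact in Hn.
  apply not_all_ex_not in Hn. destruct Hn as [f Hf].
  apply imply_to_and in Hf. destruct Hf as [Hc Hnb].
  exists (fun x => Rabs (f x)). split; [apply rcont_abs; exact Hc|split].
  - intros; apply Rabs_pos.
  - intros k. apply NNPP. intros Hk. apply Hnb. exists (INR k). intros x.
    apply Rnot_lt_le. intros Hlt. apply Hk. exists x. lra.
Qed.

Lemma choose_pts (f : X -> R) : (forall k : nat, exists x, INR k <= f x) ->
  exists xs : nat -> X, forall k, INR k <= f (xs k).
Proof.
  intros H. exists (fun k => proj1_sig (constructive_indefinite_description _ (H k))).
  intros k. exact (proj2_sig (constructive_indefinite_description _ (H k))).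
Qed.

Lemma Cm_ball_open (h e : CX X) : (forall x, 0 < ev e x) ->
  Cm_open X (fun g => forall x, Rabs (ev g x - ev h x) < ev e x).
Proof.
  intros He g Hg.
  assert (Hc : rcontinuous X (fun x => ev e x - Rabs (ev g x - ev h x))).
  { apply rcont_minus. apply ev_cont. apply rcont_abs. apply rcont_minus; apply ev_cont. }
  exists (mkC X _ Hc). split.
  - intros x. rewrite ev_mkC. specialize (Hg x). lra.
  - intros g' Hg' x. specialize (Hg' x). rewrite ev_mkC in Hg'.
    replace (ev g' x - ev h x) with ((ev g' x - ev g x) + (ev g x - ev h x)) by ring.
    eapply Rle_lt_trans; [apply Rabs_triang|]. lra.
Qed.

Lemma Cm_open_full : Cm_open X (fun _ => True).
Proof.
  intros g _. exists (cconst X 1). split; [intros; unfold cconst; rewrite ev_mkC; lra|].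
  intros; exact I.
Qed.

Fixpoint lsum (l : list (CX X)) (x : X) : R :=
  match l with nil => 0 | a :: l' => Rabs (ev a x) + lsum l' x end.

Lemma lsum_ge l a x : In a l -> Rabs (ev a x) <= lsum l x.
Proof.
  induction l; simpl; [tauto|]. intros [->|H].
  - assert (0 <= lsum l x). { clear. induction l; simpl; [lra|]. assert (0 <= Rabs (ev a x)) by apply Rabs_pos. lra. }
    lra.
  - specialize (IHl H). assert (0 <= Rabs (ev a0 x)) by apply Rabs_pos. lra.
Qed.

Lemma lsum_nonneg l x : 0 <= lsum l x.
Proof. induction l; simpl; [lra|]. assert (0 <= Rabs (ev a x)) by apply Rabs_pos. lra. Qed.

Theorem Mb_pc : Mbounded X (Cp_open X) -> pseudocompact X.
Proof.
  intros HM. apply NNPP. intros Hn.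
  destruct (unbounded_f Hn) as [f [Hfc [Hf0 Hfk]]].
  destruct (choose_pts f Hfk) as [xs Hxs].
  set (U := fun (n : nat) (g : CX X) => Rabs (ev g (xs n)) < 1).
  assert (HU : forall n, nbhd0 X (Cp_open X) (U n)).
  { intros n. exists (U n). split; [|split].
    - intros g Hg. exists (xs n :: nil), (1 - Rabs (ev g (xs n))). split; [unfold U in Hg; lra|].
      intros g' Hg'. specialize (Hg' (xs n) (or_introl eq_refl)). unfold U in *.
      assert (Rabs (ev g' (xs n)) <= Rabs (ev g' (xs n) - ev g (xs n)) + Rabs (ev g (xs n))).
      { replace (ev g' (xs n)) with ((ev g' (xs n) - ev g (xs n)) + ev g (xs n)) at 1 by ring. apply Rabs_triang. }
      lra.
    - unfold U, f0, ev; simpl. rewrite Rabs_R0. lra.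
    - tauto. }
  destruct (HM U HU) as [A HA].
  set (C := fun n => 1 + lsum (A n) (xs n)).
  assert (Cpos : forall n, 0 < C n). { intros n. unfold C. assert (H := lsum_nonneg (A n) (xs n)). lra. }
  destruct (toolT (fun k => / C k) (fun k => f (xs k))) as [psi [Hpc [Hpp Hpk]]].
  { intros k. apply Rinv_0_lt_compat. apply Cpos. }
  { intros k. apply Hxs. }
  assert (Hgc : rcontinuous X (fun x => / psi (f x))).
  { apply (rcont_comp f (fun s => / psi s)); [exact Hfc|]. intros x.
    apply (continuity_pt_inv psi). apply Hpc. apply Rgt_not_eq. apply Hpp. }
  set (g := mkC X _ Hgc).
  destruct (HA g) as [n [a [Ha [u [Hu Hgu]]]]].
  specialize (Hgu (xs n)). unfold g in Hgu. rewrite ev_mkC in Hgu.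
  assert (H1 : C n <= / psi (f (xs n))).
  { specialize (Hpk n). simpl in Hpk. specialize (Cpos n).
    rewrite <- (Rinv_inv (C n)). apply Rinv_le_contravar; [apply Hpp|exact Hpk]. }
  assert (H2 := lsum_ge (A n) a (xs n) Ha).
  unfold U in Hu. unfold C in H1.
  assert (ev u (xs n) = / psi (f (xs n)) - ev a (xs n)) by lra.
  assert (ev a (xs n) <= Rabs (ev a (xs n))) by apply Rle_abs.
  assert (ev u (xs n) <= Rabs (ev u (xs n))) by apply Rle_abs.
  lra.
Qed.

Theorem ct_pc : countable_tightness (CX X) (Cm_open X) -> pseudocompact X.
Proof.
  intros HT. apply NNPP. intros Hn.
  destruct (unbounded_f Hn) as [f [Hfc [Hf0 Hfk]]].
  destruct (choose_pts f Hfk) as [xs Hxs].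
  set (A := fun g : CX X => forall x, 0 < ev g x).
  assert (Hcl : closure (CX X) (Cm_open X) A (f0 X)).
  { intros U HU HU0. destruct (HU _ HU0) as [e [He Hball]].
    assert (Hc : rcontinuous X (fun x => / 2 * ev e x)) by (apply rcont_scal; apply ev_cont).
    exists (mkC X _ Hc). split.
    - intros x. rewrite ev_mkC. specialize (He x). lra.
    - apply Hball. intros x. rewrite ev_mkC. unfold f0, ev at 2; simpl. specialize (He x).
      rewrite Rminus_0_r. rewrite Rabs_right by lra. lra. }
  destruct (HT A (f0 X) Hcl) as [B [HBA [[s Hs] HBcl]]].
  set (c := fun k => let v := ev (s k) (xs k) in
             match Rlt_dec 0 v with left _ => v | right _ => 1 end).
  assert (Hcp : forall k, 0 < c k).
  { intros k. unfold c. destruct (Rlt_dec 0 (ev (s k) (xs k))); lra. }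
  destruct (toolT c (fun k => f (xs k)) Hcp (fun k => Hxs k)) as [psi [Hpc [Hpp Hpk]]].
  assert (Hec : rcontinuous X (fun x => psi (f x))).
  { apply (rcont_comp f psi); [exact Hfc|]. intros; apply Hpc. }
  set (e := mkC X _ Hec).
  assert (Hepos : forall x, 0 < ev e x) by (intros; unfold e; rewrite ev_mkC; apply Hpp).
  destruct (HBcl _ (Cm_ball_open (f0 X) e Hepos)) as [b [Hb Hbu]].
  { intros x. unfold f0, ev at 1 2; simpl. unfold Rminus. rewrite Rplus_opp_r, Rabs_R0. apply Hepos. }
  destruct (Hs b Hb) as [k Hk]. subst b.
  specialize (HBA _ Hb (xs k)). specialize (Hbu (xs k)). specialize (Hpk k).
  unfold e in Hbu. rewrite ev_mkC in Hbu. unfold f0, ev at 2 in Hbu; simpl in Hbu.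
  rewrite Rminus_0_r in Hbu. rewrite Rabs_right in Hbu by lra.
  unfold c in Hpk. simpl in Hpk. destruct (Rlt_dec 0 (ev (s k) (xs k))); lra.
Qed.

Definition tau (s : R) : R := / 2 * ((1 - Rabs s) + Rabs (1 - Rabs s)).

Lemma tau_cont s : continuity_pt tau s.
Proof.
  unfold tau. apply (continuity_pt_scal (fun s => (1 - Rabs s) + Rabs (1 - Rabs s))).
  assert (Ha : continuity_pt (fun s => 1 - Rabs s) s).
  { apply (continuity_pt_minus (fun _ => 1) Rabs). apply continuity_pt_const; intros a b; reflexivity.
    apply Rcontinuity_abs. }
  apply (continuity_pt_plus (fun s => 1 - Rabs s) (fun s => Rabs (1 - Rabs s))); [exact Ha|].
  apply (continuity_pt_comp (fun s => 1 - Rabs s) Rabs); [exact Ha|apply Rcontinuity_abs].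
Qed.

Lemma tau_0 : tau 0 = 1.
Proof. unfold tau. rewrite Rabs_R0. rewrite Rminus_0_r. rewrite Rabs_R1. field. Qed.

Lemma tau_far s : 1 <= Rabs s -> tau s = 0.
Proof. intros H. unfold tau. rewrite (Rabs_left1 (1 - Rabs s)) by lra. field. Qed.

Lemma tau_bounds s : 0 <= tau s <= 1.
Proof.
  unfold tau. assert (0 <= Rabs s) by apply Rabs_pos.
  destruct (Rle_dec (Rabs s) 1).
  - rewrite (Rabs_right (1 - Rabs s)) by lra. lra.
  - rewrite (Rabs_left1 (1 - Rabs s)) by lra. lra.
Qed.

Theorem hB_pc : hereditarily_Baire (CX X) (Cm_open X) -> pseudocompact X.
Proof.
  intros HB. apply NNPP. intros Hn.
  destruct (unbounded_f Hn) as [f [Hfc [Hf0 Hfk]]].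
  set (F := fun g : CX X => exists N : nat, forall x, INR N <= f x -> ev g x = 0).
  set (W := fun (n : nat) (g : CX X) => exists x, INR n <= f x /\ ev g x <> 0).
  assert (HFc : Cm_open X (fun g => ~ F g)).
  { intros g Hg.
    assert (Hy : forall k : nat, exists y, INR k <= f y /\ ev g y <> 0).
    { intros k. apply NNPP. intros Hk. apply Hg. exists k. intros x Hx.
      apply NNPP. intros Hne. apply Hk. exists x. auto. }
    set (ys := fun k => proj1_sig (constructive_indefinite_description _ (Hy k))).
    assert (Hys : forall k, INR k <= f (ys k) /\ ev g (ys k) <> 0).
    { intros k. exact (proj2_sig (constructive_indefinite_description _ (Hy k))). }
    destruct (toolT (fun k => Rabs (ev g (ys k)) / 2) (fun k => f (ys k))) as [psi [Hpc [Hpp Hpk]]].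
    { intros k. assert (0 < Rabs (ev g (ys k))) by (apply Rabs_pos_lt; apply Hys). lra. }
    { intros k. apply Hys. }
    assert (Hec : rcontinuous X (fun x => psi (f x))).
    { apply (rcont_comp f psi); [exact Hfc|]. intros; apply Hpc. }
    exists (mkC X _ Hec). split; [intros; rewrite ev_mkC; apply Hpp|].
    intros g' Hg' [N HN]. specialize (Hg' (ys N)). rewrite ev_mkC in Hg'.
    specialize (Hpk N). simpl in Hpk. rewrite (HN (ys N) (proj1 (Hys N))) in Hg'.
    rewrite Rminus_0_l, Rabs_Ropp in Hg'. assert (0 < Rabs (ev g (ys N))) by (apply Rabs_pos_lt; apply Hys). lra. }
  assert (HWo : forall n, Cm_open X (W n)).
  { intros n g [x [Hx Hgx]].
    exists (cconst X (Rabs (ev g x) / 2)). assert (0 < Rabs (ev g x)) by (apply Rabs_pos_lt; auto).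
    split; [intros; unfold cconst; rewrite ev_mkC; lra|].
    intros g' Hg'. exists x. split; [exact Hx|]. specialize (Hg' x). unfold cconst in Hg'. rewrite ev_mkC in Hg'.
    intros H0. rewrite H0 in Hg'. rewrite Rminus_0_l, Rabs_Ropp in Hg'. lra. }
  assert (HWd : forall n, dense_in (CX X) (Cm_open X) F (W n)).
  { intros n O HO [g [[N HN] HOg]].
    destruct (HO g HOg) as [e [He Hball]].
    destruct (Hfk (Nat.add n N)) as [x Hx].
    assert (Hbc : rcontinuous X (fun z => ev g z + / 2 * ev e z * tau (f z - f x))).
    { apply rcont_plus; [apply ev_cont|]. apply rcont_mult; [apply rcont_scal; apply ev_cont|].
      apply (rcont_comp (fun z => f z - f x) tau). apply rcont_minus; [exact Hfc|apply rcont_const].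
      intros; apply tau_cont. }
    set (g' := mkC X _ Hbc). exists g'. split; [|split].
    - destruct (exists_nat_ge (f x + 1)) as [N1 HN1].
      exists (Nat.add N N1). intros z Hz. unfold g'. rewrite ev_mkC. rewrite plus_INR in Hz.
      assert (0 <= INR N) by apply pos_INR. assert (0 <= INR N1) by apply pos_INR.
      rewrite HN by lra. rewrite tau_far. ring. rewrite Rabs_right; lra.
    - apply Hball. intros z. unfold g'. rewrite ev_mkC.
      replace (ev g z + / 2 * ev e z * tau (f z - f x) - ev g z) with (/ 2 * ev e z * tau (f z - f x)) by ring.
      specialize (He z). assert (Ht := tau_bounds (f z - f x)).
      rewrite Rabs_right. 2:{ apply Rle_ge. apply Rmult_le_pos; [|lra]. lra. }
      assert (/ 2 * ev e z * tau (f z - f x) <= / 2 * ev e z).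
      { rewrite <- (Rmult_1_r (/2 * ev e z)) at 2. apply Rmult_le_compat_l; lra. }
      lra.
    - exists x. rewrite plus_INR in Hx. assert (0 <= INR N) by apply pos_INR. assert (0 <= INR n) by apply pos_INR.
      split; [lra|]. unfold g'. rewrite ev_mkC. rewrite HN by lra.
      unfold Rminus. rewrite Rplus_opp_r. rewrite tau_0. specialize (He x). lra. }
  destruct (HB F HFc W HWo HWd (fun _ => True) Cm_open_full) as [t [[N HN] [_ HW]]].
  { exists (f0 X). split; [|exact I]. exists 0%nat. intros; reflexivity. }
  destruct (HW N) as [x [Hx Htx]]. apply Htx. apply HN. exact Hx.
Qed.

End Neg.

Lemma floor_nat (r d : R) : 0 <= r -> 0 < d -> exists k : nat, INR k * d <= r < INR (S k) * d.
Proof.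
  intros Hr Hd. destruct (archimed (r / d)) as [H1 H2].
  assert (Hrd : 0 <= r / d) by (apply Rmult_le_pos; [lra|left; apply Rinv_0_lt_compat; lra]).
  assert (Hz : (1 <= up (r / d))%Z).
  { apply le_IZR. simpl. 
    assert (Hint : (0 < up (r / d))%Z) by (apply lt_IZR; simpl; lra).
    apply IZR_le. lia. }
  exists (Z.to_nat (up (r / d) - 1)%Z).
  assert (E : INR (Z.to_nat (up (r / d) - 1)%Z) = IZR (up (r / d)) - 1).
  { rewrite INR_IZR_INZ. rewrite Z2Nat.id by lia. rewrite minus_IZR. reflexivity. }
  rewrite S_INR, E.
  assert (r = (r / d) * d) by (field; lra).
  split.
  - replace r with ((r / d) * d) at 2 by (field; lra). apply Rmult_le_compat_r; lra.
  - replace r with ((r / d) * d) at 1 by (field; lra). apply Rmult_lt_compat_r; lra.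
Qed.

Section Pos.
Variable X : TopSpace.

Lemma net (F : list X) (n eps : R) : 0 < eps -> forall P : CX X -> Prop,
  exists A : list (CX X), (forall a, In a A -> P a) /\
    forall g, P g -> (forall x, In x F -> Rabs (ev g x) <= n) ->
      exists a, In a A /\ forall x, In x F -> Rabs (ev g x - ev a x) < eps.
Proof.
  intros Heps. induction F as [|x F IH]; intros P.
  - destruct (classic (exists g, P g)) as [[g Hg]|Hno].
    + exists (g :: nil). split; [intros a [<-|[]]; exact Hg|].
      intros g' _ _. exists g. split; [left; reflexivity|intros x []].
    + exists nil. split; [intros a []|]. intros g Hg. exfalso. apply Hno. exists g. exact Hg.
  - set (d := eps / 2).
    assert (Hd : 0 < d) by (unfold d; lra).
    set (slice := fun (k : nat) (g : CX X) => P g /\ Rabs (ev g x - (- n + INR k * d)) < d).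
    set (Ak := fun k => proj1_sig (constructive_indefinite_description _ (IH (slice k)))).
    assert (HAk : forall k, (forall a, In a (Ak k) -> slice k a) /\
       forall g, slice k g -> (forall x, In x F -> Rabs (ev g x) <= n) ->
       exists a, In a (Ak k) /\ forall x, In x F -> Rabs (ev g x - ev a x) < eps).
    { intros k. exact (proj2_sig (constructive_indefinite_description _ (IH (slice k)))). }
    destruct (exists_nat_ge (2 * Rabs n / d)) as [K HK].
    exists (flat_map Ak (seq 0 (S K))). split.
    + intros a Ha. apply in_flat_map in Ha. destruct Ha as [k [_ Hk]]. apply (proj1 (HAk k)) in Hk. apply Hk.
    + intros g Hg Hb.
      assert (Hgx := Hb x (or_introl eq_refl)).
      assert (ev g x <= Rabs (ev g x)) by apply Rle_abs. assert (- ev g x <= Rabs (ev g x)) by (rewrite <- Rabs_Ropp; apply Rle_abs).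
      destruct (floor_nat (ev g x + n) d) as [k [Hk1 Hk2]]; [lra|exact Hd|].
      assert (Hsl : slice k g).
      { split; [exact Hg|]. rewrite S_INR in Hk2. apply Rabs_def1; nra. }
      destruct (proj2 (HAk k) g Hsl (fun y Hy => Hb y (or_intror Hy))) as [a [Ha Hga]].
      exists a. split.
      * apply in_flat_map. exists k. split; [|exact Ha]. apply in_seq. split; [lia|].
        assert (HkK : INR k <= INR K).
        { assert (Hn : n <= Rabs n) by apply Rle_abs.
          assert (INR k * d <= 2 * Rabs n) by lra.
          assert (2 * Rabs n / d * d = 2 * Rabs n) by (field; lra).
          assert (INR k * d <= INR K * d) by nra.
          apply (Rmult_le_reg_r d); lra. }
        apply INR_le in HkK. lia.
      * intros y [<-|Hy].
        -- destruct (proj1 (HAk k) a Ha) as [_ Ha2]. destruct Hsl as [_ Hg2].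
           replace (ev g x - ev a x) with ((ev g x - (- n + INR k * d)) - (ev a x - (- n + INR k * d))) by ring.
           eapply Rle_lt_trans; [apply Rabs_triang|]. rewrite Rabs_Ropp. unfold d in *. lra.
        -- apply Hga. exact Hy.
Qed.

Lemma plusset_exists (U : CX X -> Prop) (n : R) : exists A : list (CX X),
  nbhd0 X (Cp_open X) U -> forall g, (forall x, Rabs (ev g x) <= n) -> plusset X A U g.
Proof.
  destruct (classic (nbhd0 X (Cp_open X) U)) as [HU|HU]; [|exists nil; intros H; contradiction].
  destruct HU as [O [HO [HO0 HOU]]]. destruct (HO _ HO0) as [F [eps [Heps Hball]]].
  destruct (net F n eps Heps (fun _ => True)) as [A [_ HA]].
  exists A. intros _ g Hg. destruct (HA g I (fun x _ => Hg x)) as [a [Ha Hga]].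
  exists a. split; [exact Ha|]. exists (csub X g a). split.
  - apply HOU. apply Hball. intros x Hx. unfold csub. rewrite ev_mkC. unfold f0, ev at 3; simpl.
    rewrite Rminus_0_r. apply Hga. exact Hx.
  - intros x. unfold csub. rewrite ev_mkC. ring.
Qed.

Definition sigmaH (hist : list (CX X -> Prop)) : list (CX X) :=
  proj1_sig (constructive_indefinite_description _
     (plusset_exists (last hist (fun _ => True)) (INR (length hist)))).

Lemma history_last (U : nat -> (CX X -> Prop)) n : last (history U n) (fun _ => True) = U n.
Proof. unfold history. rewrite seq_S. rewrite map_app. simpl. apply last_last. Qed.

Lemma history_length (U : nat -> (CX X -> Prop)) n : length (history U n) = S n.
Proof. unfold history. rewrite length_map, length_seq. reflexivity. Qed.

Theorem pc_sH : pseudocompact X -> strictly_Hbounded X (Cp_open X).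
Proof.
  intros Hpc. exists sigmaH. intros U HU g.
  destruct (Hpc (ev g) (ev_cont g)) as [M HM].
  destruct (exists_nat_ge M) as [N HN]. exists N. intros n Hn.
  unfold sigmaH. destruct (constructive_indefinite_description _ _) as [A HA]. simpl.
  rewrite history_last, history_length in HA.
  apply HA. apply HU. intros x. eapply Rle_trans; [apply HM|].
  assert (INR N <= INR (S n)) by (apply le_INR; lia). lra.
Qed.

Lemma sH_H op : strictly_Hbounded X op -> Hbounded X op.
Proof.
  intros [sigma Hs] U HU. exists (fun n => sigma (history U n)). intros g. apply Hs. exact HU.
Qed.

Lemma sH_sM op : strictly_Hbounded X op -> strictly_Mbounded X op.
Proof.
  intros [sigma Hs]. exists sigma. intros U HU g. destruct (Hs U HU g) as [N HN].
  exists N. apply HN. lia.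
Qed.

Lemma sM_M op : strictly_Mbounded X op -> Mbounded X op.
Proof.
  intros [sigma Hs] U HU. exists (fun n => sigma (history U n)). intros g. apply Hs. exact HU.
Qed.

Lemma H_M op : Hbounded X op -> Mbounded X op.
Proof.
  intros Hh U HU. destruct (Hh U HU) as [A HA]. exists A. intros g. destruct (HA g) as [N HN].
  exists N. apply HN. lia.
Qed.

End Pos.

Section Chain.
Variable T : Type.
Variable op : (T -> Prop) -> Prop.

Lemma cm_fc : completely_metrizable T op -> first_countable T op.
Proof.
  intros [d [Hd0 [Hdz [Hds [Hdt [Hop _]]]]]] y.
  exists (fun n t => d y t < / (INR n + 1)). split.
  - intros n. assert (Hp : 0 < / (INR n + 1)) by (apply Rinv_0_lt_compat; assert (0 <= INR n) by apply pos_INR; lra).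
    split.
    + apply Hop. intros t Ht. exists (/ (INR n + 1) - d y t). split; [lra|].
      intros z Hz. specialize (Hdt y t z). lra.
    + assert (d y y = 0) by (apply Hdz; reflexivity). lra.
  - intros U HU HUy. destruct (proj1 (Hop U) HU y HUy) as [r [Hr Hball]].
    destruct (exists_nat_ge (/ r)) as [n Hn]. exists n. intros t Ht. apply Hball.
    eapply Rlt_le_trans; [exact Ht|].
    assert (0 <= INR n) by apply pos_INR.
    rewrite <- (Rinv_inv r). apply Rinv_le_contravar; [apply Rinv_0_lt_compat; exact Hr|lra].
Qed.

Hypothesis op_inter : forall U V, op U -> op V -> op (fun t => U t /\ V t).

Lemma fc_sFU : first_countable T op -> strictly_Frechet_Urysohn T op.
Proof.
  intros Hfc A y HA. destruct (Hfc y) as [B [HB Hbase]].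
  set (Bi := fix Bi (n : nat) : T -> Prop := match n with O => B O | S m => fun t => Bi m t /\ B (S m) t end).
  assert (HBi : forall n, op (Bi n) /\ Bi n y).
  { induction n; simpl; [apply HB|]. split; [apply op_inter; [apply IHn|apply HB]|split; [apply IHn|apply HB]]. }
  assert (HBmon : forall n m t, le n m -> Bi m t -> B n t).
  { intros n m t Hnm. induction Hnm.
    - destruct n; simpl; [auto|tauto].
    - simpl. intros [H _]. auto. }
  assert (Hex : forall n, exists a, A n a /\ Bi n a).
  { intros n. destruct (HA n (Bi n) (proj1 (HBi n)) (proj2 (HBi n))) as [a Ha]. exists a. exact Ha. }
  exists (fun n => proj1_sig (constructive_indefinite_description _ (Hex n))). split.
  - intros n. exact (proj1 (proj2_sig (constructive_indefinite_description _ (Hex n)))).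
  - intros U HU HUy. destruct (Hbase U HU HUy) as [n Hn]. exists n. intros m Hm.
    apply Hn. apply (HBmon n m); [exact Hm|].
    exact (proj2 (proj2_sig (constructive_indefinite_description _ (Hex m)))).
Qed.

Lemma sFU_csft : strictly_Frechet_Urysohn T op -> countable_strong_fan_tightness T op.
Proof.
  intros H A y HA. destruct (H A y HA) as [a [Ha Hc]]. exists a. split; [exact Ha|].
  intros U HU HUy. destruct (Hc U HU HUy) as [N HN]. exists (a N). split; [exists N; reflexivity|apply HN; lia].
Qed.

Lemma csft_cft : countable_strong_fan_tightness T op -> countable_fan_tightness T op.
Proof.
  intros H A y HA. destruct (H A y HA) as [b [Hb Hc]]. exists (fun n => b n :: nil). split.
  - intros n t [<-|[]]. apply Hb.
  - intros U HU HUy. destruct (Hc U HU HUy) as [t [[n Hn] Ht]]. exists t. split; [exists n; left; exact Hn|exact Ht].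
Qed.

Lemma cft_ct : countable_fan_tightness T op -> countable_tightness T op.
Proof.
  intros H A y HA. destruct (H (fun _ => A) y (fun _ => HA)) as [B [HB Hc]].
  exists (fun t => exists n, In t (B n)). split; [|split].
  - intros b [n Hn]. exact (HB n b Hn).
  - exists (fun m => nth (snd (of_nat m)) (B (fst (of_nat m))) y).
    intros b [n Hn]. destruct (In_nth _ _ y Hn) as [i [_ Hi]].
    exists (to_nat (n, i)). rewrite cancel_of_to. simpl. exact Hi.
  - exact Hc.
Qed.

End Chain.

Section Metric.
Variable X : TopSpace.

Definition Eset (f g : CX X) (r : R) : Prop :=
  r = 0 \/ exists x, r = Rmin 1 (Rabs (ev f x - ev g x)).

Lemma Eset_bound f g : bound (Eset f g).
Proof. exists 1. intros r [->|[x ->]]; [lra|apply Rmin_l]. Qed.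

Lemma Eset_ne f g : exists r, Eset f g r.
Proof. exists 0. left. reflexivity. Qed.

Definition dm (f g : CX X) : R := proj1_sig (completeness _ (Eset_bound f g) (Eset_ne f g)).

Lemma dm_lub f g : is_lub (Eset f g) (dm f g).
Proof. unfold dm. exact (proj2_sig (completeness _ (Eset_bound f g) (Eset_ne f g))). Qed.

Lemma dm_ge f g x : Rmin 1 (Rabs (ev f x - ev g x)) <= dm f g.
Proof. apply (proj1 (dm_lub f g)). right. exists x. reflexivity. Qed.

Lemma dm_nonneg f g : 0 <= dm f g.
Proof. apply (proj1 (dm_lub f g)). left. reflexivity. Qed.

Lemma dm_le f g r : 0 <= r -> (forall x, Rmin 1 (Rabs (ev f x - ev g x)) <= r) -> dm f g <= r.
Proof. intros H0 H. apply (proj2 (dm_lub f g)). intros s [->|[x ->]]; auto. Qed.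

Lemma dm_le1 f g : dm f g <= 1.
Proof. apply dm_le; [lra|]. intros; apply Rmin_l. Qed.

Lemma dm_le_pt f g r : 0 <= r -> (forall x, Rabs (ev f x - ev g x) <= r) -> dm f g <= r.
Proof. intros H0 H. apply dm_le; [exact H0|]. intros x. eapply Rle_trans; [apply Rmin_r|apply H]. Qed.

Lemma dm_lt_pt f g r : dm f g < r -> r <= 1 -> forall x, Rabs (ev f x - ev g x) < r.
Proof.
  intros H Hr x. assert (H1 := dm_ge f g x). unfold Rmin in H1.
  destruct (Rle_dec 1 (Rabs (ev f x - ev g x))); lra.
Qed.

Lemma dm_sym f g : dm f g = dm g f.
Proof.
  apply Rle_antisym; apply dm_le; try apply dm_nonneg; intros x; rewrite Rabs_minus_sym; apply dm_ge.
Qed.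

Lemma min1_tri a b c : 0 <= b -> 0 <= c -> a <= b + c -> Rmin 1 a <= Rmin 1 b + Rmin 1 c.
Proof. intros. unfold Rmin; repeat destruct Rle_dec; lra. Qed.

Lemma dm_tri f g h : dm f h <= dm f g + dm g h.
Proof.
  apply dm_le. { assert (H1 := dm_nonneg f g). assert (H2 := dm_nonneg g h). lra. }
  intros x. assert (H1 := dm_ge f g x). assert (H2 := dm_ge g h x).
  assert (H3 : Rabs (ev f x - ev h x) <= Rabs (ev f x - ev g x) + Rabs (ev g x - ev h x)).
  { replace (ev f x - ev h x) with ((ev f x - ev g x) + (ev g x - ev h x)) by ring. apply Rabs_triang. }
  eapply Rle_trans; [apply min1_tri; [apply Rabs_pos|apply Rabs_pos|exact H3]|]. lra.
Qed.

Lemma dm_zero f g : dm f g = 0 <-> f = g.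
Proof.
  split.
  - intros H. apply CX_ext. intros x. assert (H1 := dm_ge f g x). rewrite H in H1.
    assert (H2 := Rabs_pos (ev f x - ev g x)).
    unfold Rmin in H1. destruct (Rle_dec 1 (Rabs (ev f x - ev g x))); [lra|].
    assert (Rabs (ev f x - ev g x) = 0) by lra.
    destruct (Rcase_abs (ev f x - ev g x)); [rewrite Rabs_left in H0 by lra|rewrite Rabs_right in H0 by lra]; lra.
  - intros ->. apply Rle_antisym; [|apply dm_nonneg]. apply dm_le_pt; [lra|].
    intros x. unfold Rminus. rewrite Rplus_opp_r, Rabs_R0. lra.
Qed.

Definition mopen (U : CX X -> Prop) : Prop :=
  forall x, U x -> exists r, 0 < r /\ forall y, dm x y < r -> U y.

Lemma pc_lower (e : CX X) : pseudocompact X -> (forall x, 0 < ev e x) ->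
  exists dl, 0 < dl /\ forall x, dl <= ev e x.
Proof.
  intros Hpc He.
  destruct (Hpc _ (rcont_inv (ev e) (ev_cont e) (fun x => Rgt_not_eq _ _ (He x)))) as [M HM].
  exists (/ (Rabs M + 1)). split; [apply Rinv_0_lt_compat; assert (0 <= Rabs M) by apply Rabs_pos; lra|].
  intros x. specialize (HM x). specialize (He x).
  assert (Hi : 0 < / ev e x) by (apply Rinv_0_lt_compat; exact He).
  rewrite Rabs_right in HM by lra.
  assert (M <= Rabs M) by apply Rle_abs.
  rewrite <- (Rinv_inv (ev e x)). apply Rinv_le_contravar; [exact Hi|lra].
Qed.

Lemma Cm_mopen U : pseudocompact X -> (Cm_open X U <-> mopen U).
Proof.
  intros Hpc. split.
  - intros HU f Hf. destruct (HU f Hf) as [e [He Hball]].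
    destruct (pc_lower e Hpc He) as [dl [Hdl Hdle]].
    exists (Rmin 1 dl). split; [apply Rmin_glb_lt; lra|].
    intros g Hg. apply Hball. intros x.
    assert (H := dm_lt_pt f g (Rmin 1 dl) Hg (Rmin_l _ _) x).
    rewrite Rabs_minus_sym in H. specialize (Hdle x). assert (Rmin 1 dl <= dl) by apply Rmin_r. lra.
  - intros HU f Hf. destruct (HU f Hf) as [r [Hr Hball]].
    exists (cconst X (Rmin r 1 / 2)). assert (0 < Rmin r 1) by (apply Rmin_glb_lt; lra).
    split; [intros; unfold cconst; rewrite ev_mkC; lra|].
    intros g Hg. apply Hball.
    assert (dm f g <= Rmin r 1 / 2).
    { apply dm_le_pt; [lra|]. intros x. specialize (Hg x). unfold cconst in Hg. rewrite ev_mkC in Hg.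
      rewrite Rabs_minus_sym. lra. }
    assert (Rmin r 1 <= r) by apply Rmin_l. lra.
Qed.

Lemma dm_complete (s : nat -> CX X) :
  (forall eps, 0 < eps -> exists N, forall m n, le N m -> le N n -> dm (s m) (s n) < eps) ->
  exists l, forall eps, 0 < eps -> exists N, forall n, le N n -> dm (s n) l < eps.
Proof.
  intros Hc.
  assert (Hu : forall eps, 0 < eps -> exists N, forall m n x, le N m -> le N n ->
                Rabs (ev (s m) x - ev (s n) x) < eps).
  { intros eps He. destruct (Hc (Rmin eps 1)) as [N HN]; [apply Rmin_glb_lt; lra|].
    exists N. intros m n x Hm Hn. assert (H := dm_lt_pt _ _ _ (HN m n Hm Hn) (Rmin_r _ _) x).
    assert (Rmin eps 1 <= eps) by apply Rmin_l. lra. }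
  assert (Hcc : forall x, Cauchy_crit (fun n => ev (s n) x)).
  { intros x eps He. destruct (Hu eps He) as [N HN]. exists N. intros n m Hn Hm. unfold Rdist.
    apply HN; lia. }
  set (L := fun x => proj1_sig (R_complete _ (Hcc x))).
  assert (HL : forall x, Un_cv (fun n => ev (s n) x) (L x)).
  { intros x. exact (proj2_sig (R_complete _ (Hcc x))). }
  assert (HuL : forall eps, 0 < eps -> exists N, forall n x, le N n -> Rabs (ev (s n) x - L x) <= eps).
  { intros eps He. destruct (Hu eps He) as [N HN]. exists N. intros n x Hn.
    apply Rnot_lt_le. intros Hlt.
    set (del := Rabs (ev (s n) x - L x) - eps).
    destruct (HL x del) as [M HM]; [unfold del; lra|].
    specialize (HM (Nat.max M N) (Nat.le_max_l _ _)). unfold Rdist in HM.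
    specialize (HN n (Nat.max M N) x Hn (Nat.le_max_r _ _)).
    assert (Rabs (ev (s n) x - L x) <= Rabs (ev (s n) x - ev (s (Nat.max M N)) x) + Rabs (ev (s (Nat.max M N)) x - L x)).
    { replace (ev (s n) x - L x) with ((ev (s n) x - ev (s (Nat.max M N)) x) + (ev (s (Nat.max M N)) x - L x)) by ring.
      apply Rabs_triang. }
    unfold del in HM. lra. }
  assert (HLc : rcontinuous X L).
  { intros x eps He. destruct (HuL (eps / 3)) as [N HN]; [lra|].
    destruct (ev_cont (s N) x (eps / 3)) as [U [HU [HUx HUy]]]; [lra|].
    exists U. split; [exact HU|split; [exact HUx|]]. intros y Hy.
    specialize (HUy y Hy). assert (H1 := HN N y (le_n _)). assert (H2 := HN N x (le_n _)).
    replace (L y - L x) with (-(ev (s N) y - L y) + (ev (s N) y - ev (s N) x) + (ev (s N) x - L x)) by ring.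
    eapply Rle_lt_trans; [apply Rabs_triang|].
    eapply Rle_lt_trans; [apply Rplus_le_compat_r; apply Rabs_triang|].
    rewrite Rabs_Ropp. lra. }
  exists (mkC X L HLc). intros eps He.
  destruct (HuL (Rmin eps 1 / 2)) as [N HN]; [assert (0 < Rmin eps 1) by (apply Rmin_glb_lt; lra); lra|].
  exists N. intros n Hn. apply Rle_lt_trans with (Rmin eps 1 / 2).
  - apply dm_le_pt; [assert (0 < Rmin eps 1) by (apply Rmin_glb_lt; lra); lra|]. intros x. rewrite ev_mkC. apply HN. exact Hn.
  - assert (0 < Rmin eps 1) by (apply Rmin_glb_lt; lra). assert (Rmin eps 1 <= eps) by apply Rmin_l. lra.
Qed.

Theorem pc_cm : pseudocompact X -> completely_metrizable (CX X) (Cm_open X).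
Proof.
  intros Hpc. exists dm. split; [apply dm_nonneg|split; [apply dm_zero|split; [apply dm_sym|split; [apply dm_tri|split]]]].
  - intros U. apply Cm_mopen. exact Hpc.
  - apply dm_complete.
Qed.

Lemma Cm_open_inter U V : Cm_open X U -> Cm_open X V -> Cm_open X (fun t => U t /\ V t).
Proof.
  intros HU HV f [Hf1 Hf2]. destruct (HU f Hf1) as [e1 [He1 H1]]. destruct (HV f Hf2) as [e2 [He2 H2]].
  exists (mkC X _ (rcont_min _ _ (ev_cont e1) (ev_cont e2))). split.
  - intros x. rewrite ev_mkC. apply Rmin_glb_lt; auto.
  - intros g Hg. split.
    + apply H1. intros x. specialize (Hg x). rewrite ev_mkC in Hg. assert (H := Rmin_l (ev e1 x) (ev e2 x)). lra.
    + apply H2. intros x. specialize (Hg x). rewrite ev_mkC in Hg. assert (H := Rmin_r (ev e1 x) (ev e2 x)). lra.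
Qed.

End Metric.

Section KTop.
Variable K : TopSpace.

Lemma open_local (P : K -> Prop) :
  (forall k, P k -> exists V, isopen K V /\ V k /\ forall k', V k' -> P k') -> isopen K P.
Proof.
  intros H.
  assert (E : (fun x => exists U, (isopen K U /\ forall k', U k' -> P k') /\ U x) = P).
  { apply functional_extensionality. intros x. apply propositional_extensionality. split.
    - intros [U [[_ HU] Hx]]. apply HU. exact Hx.
    - intros Hx. destruct (H x Hx) as [V [HV [HVx HVP]]]. exists V. tauto. }
  rewrite <- E. apply open_union. intros U [HU _]. exact HU.
Qed.

Definition clV (V : K -> Prop) (k : K) : Prop :=
  forall V', isopen K V' -> V' k -> exists k', V k' /\ V' k'.

Lemma clV_self V k : V k -> clV V k.
Proof. intros Hk V' _ HV'. exists k. auto. Qed.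

Lemma clV_mono (V V2 : K -> Prop) k : (forall x, V x -> V2 x) -> clV V k -> clV V2 k.
Proof. intros H Hk V' HV' HV'k. destruct (Hk V' HV' HV'k) as [k' [H1 H2]]. exists k'. auto. Qed.

Lemma regularity : Defs.compact K -> hausdorff K -> forall (Y : K -> Prop) p, isopen K Y -> Y p ->
  exists V, isopen K V /\ V p /\ forall k, clV V k -> Y k.
Proof.
  intros Hc Hh Y p HY HYp.
  set (Fam := fun U : K -> Prop => U = Y \/ exists P, isopen K P /\ P p /\ isopen K U /\ forall w, ~ (P w /\ U w)).
  destruct (Hc Fam) as [L [HL HLc]].
  - intros U [->|[P [_ [_ [HU _]]]]]; auto.
  - intros k. destruct (classic (Y k)) as [Hk|Hk].
    + exists Y. split; [left; reflexivity|exact Hk].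
    + assert (Hne : p <> k) by (intros ->; contradiction).
      destruct (Hh p k Hne) as [P [U [HP [HU [HPp [HUk Hdis]]]]]].
      exists U. split; [right; exists P; tauto|exact HUk].
  - assert (Aux : forall L, (forall U, In U L -> Fam U) ->
       exists V, isopen K V /\ V p /\ forall U k, In U L -> clV V k -> U k -> Y k).
    { induction L0 as [|U L0 IH]; intros HL0.
      - exists (fun _ => True). split; [apply open_full|split; [exact I|]]. intros U k [].
      - destruct IH as [V [HV [HVp HVY]]]; [intros U' HU'; apply HL0; right; exact HU'|].
        destruct (HL0 U (or_introl eq_refl)) as [->|[P [HP [HPp [HU Hdis]]]]].
        + exists V. split; [exact HV|split; [exact HVp|]]. intros U' k [<-|HU'] Hcl HUk; [exact HUk|].
          exact (HVY U' k HU' Hcl HUk).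
        + exists (fun x => V x /\ P x). split; [apply open_inter; assumption|split; [tauto|]].
          intros U' k [<-|HU'] Hcl HUk.
          * destruct (Hcl U HU HUk) as [k' [[_ HPk'] HUk']]. exfalso. apply (Hdis k'). tauto.
          * apply (HVY U' k HU'); [|exact HUk]. apply (clV_mono _ _ k (fun x Hx => proj1 Hx) Hcl). }
    destruct (Aux L HL) as [V [HV [HVp HVY]]]. exists V. split; [exact HV|split; [exact HVp|]].
    intros k Hk. destruct (HLc k) as [U [HUL HUk]]. exact (HVY U k HUL Hk HUk).
Qed.

End KTop.

Section CechBaire.
Variable T : Type.
Variable op : (T -> Prop) -> Prop.

Theorem cech_hB : Cech_complete T op -> hereditarily_Baire T op.
Proof.
  intros [K [e [Hc [Hh [Hinj [Hcont [Hemb [Hdense [Gd [HGdo HGd]]]]]]]]]].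
  intros F HF W HWo HWd O HO [t0 [HFt0 HOt0]].
  destruct (Hemb _ HF) as [Q [HQ HQe]].
  destruct (Hemb _ HO) as [O' [HO' HO'e]].
  assert (HW' : forall n, exists W', isopen K W' /\ forall t, W n t <-> W' (e t)) by (intros n; apply Hemb; apply HWo).
  set (W' := fun n => proj1_sig (constructive_indefinite_description _ (HW' n))).
  assert (HW'p : forall n, isopen K (W' n) /\ forall t, W n t <-> W' n (e t)).
  { intros n. exact (proj2_sig (constructive_indefinite_description _ (HW' n))). }
  set (good := fun V : K -> Prop => isopen K V /\ exists t, F t /\ V (e t)).
  assert (Hstep : forall n V, good V -> exists V', good V' /\ forall k, clV K V' k -> V k /\ W' n k /\ Gd n k).
  { intros n V [HV [t [HFt HVt]]].
    destruct (HWd n (fun t => V (e t)) (Hcont V HV)) as [t1 [HFt1 [HVt1 HWt1]]]; [exists t; auto|].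
    destruct (regularity K Hc Hh (fun k => V k /\ W' n k /\ Gd n k) (e t1)) as [V' [HV' [HV't1 HV'c]]].
    - apply open_inter; [exact HV|apply open_inter; [apply HW'p|apply HGdo]].
    - split; [exact HVt1|split; [apply HW'p; exact HWt1|apply HGd; exists t1; reflexivity]].
    - exists V'. split; [split; [exact HV'|exists t1; auto]|exact HV'c]. }
  assert (Hbase : exists V0, good V0 /\ forall k, clV K V0 k -> O' k).
  { destruct (regularity K Hc Hh O' (e t0) HO') as [V0 [HV0 [HV0t HV0c]]]; [apply HO'e; exact HOt0|].
    exists V0. split; [split; [exact HV0|exists t0; auto]|exact HV0c]. }
  destruct Hbase as [V0 [HV0g HV0O]].
  set (stepf := fun n (V : {V | good V}) => constructive_indefinite_description _ (Hstep n (proj1_sig V) (proj2_sig V))).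
  set (seqV := fix seqV (n : nat) : {V | good V} :=
         match n with
         | O => exist _ V0 HV0g
         | S m => exist _ (proj1_sig (stepf m (seqV m))) (proj1 (proj2_sig (stepf m (seqV m))))
         end).
  set (V := fun n => proj1_sig (seqV n)).
  assert (HVg : forall n, good (V n)) by (intros n; exact (proj2_sig (seqV n))).
  assert (HVs : forall n k, clV K (V (S n)) k -> V n k /\ W' n k /\ Gd n k).
  { intros n k. exact (proj2 (proj2_sig (stepf n (seqV n))) k). }
  set (clK := fun k => forall V', isopen K V' -> V' k -> exists t, F t /\ V' (e t)).
  set (C := fun n k => clV K (V n) k /\ clK k).
  assert (HCmon : forall n m k, le n m -> C m k -> C n k).
  { intros n m k Hnm. induction Hnm; [auto|]. intros [H1 H2]. apply IHHnm. split; [|exact H2].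
    apply clV_self. apply (HVs m k H1). }
  assert (HCne : forall n, exists k, C n k).
  { intros n. destruct (HVg n) as [_ [t [HFt HVt]]]. exists (e t). split.
    - apply clV_self. exact HVt.
    - intros V' _ HV'. exists t. auto. }
  assert (HCo : forall n, isopen K (fun k => ~ C n k)).
  { intros n. apply open_local. intros k Hk. unfold C in Hk. apply not_and_or in Hk. destruct Hk as [Hk|Hk].
    - unfold clV in Hk. apply not_all_ex_not in Hk. destruct Hk as [V' Hk].
      apply imply_to_and in Hk. destruct Hk as [HV' Hk]. apply imply_to_and in Hk. destruct Hk as [HV'k Hk].
      exists V'. split; [exact HV'|split; [exact HV'k|]]. intros k' Hk' [Hcl _].
      destruct (Hcl V' HV' Hk') as [k'' Hk'']. apply Hk. exists k''. exact Hk''.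
    - unfold clK in Hk. apply not_all_ex_not in Hk. destruct Hk as [V' Hk].
      apply imply_to_and in Hk. destruct Hk as [HV' Hk]. apply imply_to_and in Hk. destruct Hk as [HV'k Hk].
      exists V'. split; [exact HV'|split; [exact HV'k|]]. intros k' Hk' [_ Hcl].
      apply Hk. exact (Hcl V' HV' Hk'). }
  assert (Hk : exists k, forall n, C n k).
  { apply NNPP. intros Hno.
    destruct (Hc (fun U => exists n, U = (fun k => ~ C n k))) as [L [HL HLc]].
    - intros U [n ->]. apply HCo.
    - intros k. apply NNPP. intros Hk. apply Hno. exists k. intros n. apply NNPP. intros Hn.
      apply Hk. exists (fun k => ~ C n k). split; [exists n; reflexivity|exact Hn].
    - assert (Aux : forall L, (forall U, In U L -> exists n, U = (fun k => ~ C n k)) ->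
                 exists N, forall U k, In U L -> C N k -> ~ U k).
      { induction L0 as [|U L0 IH]; intros HL0.
        - exists 0%nat. intros U k [].
        - destruct IH as [N HN]; [intros U' HU'; apply HL0; right; exact HU'|].
          destruct (HL0 U (or_introl eq_refl)) as [m ->].
          exists (Nat.max N m). intros U' k [<-|HU'] HCk.
          + intros Hn. apply Hn. apply (HCmon m (Nat.max N m)); [lia|exact HCk].
          + apply (HN U' k HU'). apply (HCmon N (Nat.max N m)); [lia|exact HCk]. }
      destruct (Aux L HL) as [N HN]. destruct (HCne N) as [k HCk].
      destruct (HLc k) as [U [HUL HUk]]. exact (HN U k HUL HCk HUk). }
  destruct Hk as [k Hk].
  assert (HGdk : forall n, Gd n k) by (intros n; apply (HVs n k (proj1 (Hk (S n))))).
  destruct (proj1 (HGd k) HGdk) as [t Ht]. subst k.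
  exists t. split; [|split].
  - apply NNPP. intros HFt. apply HQe in HFt.
    destruct (proj2 (Hk 0%nat) Q HQ HFt) as [s [HFs HQs]]. apply HQe in HQs. contradiction.
  - apply HO'e. apply HV0O. exact (proj1 (Hk 0%nat)).
  - intros n. apply (proj2 (HW'p n)). apply (HVs n (e t) (proj1 (Hk (S n)))).
Qed.

End CechBaire.

Definition cube_stmt : Prop := forall (I : Type) (S : (I -> R) -> Prop),
 (forall y, S y -> forall i, Rle 0 (y i) /\ Rle (y i) 1) ->
 (forall y, (forall (l : list I) (eps : R), Rlt 0 eps ->
      exists z, S z /\ forall i, List.In i l -> Rlt (Rabs (Rminus (z i) (y i))) eps) -> S y) ->
 forall Fam : ((I -> R) -> Prop) -> Prop,
 (forall U, Fam U -> forall y, S y -> U y -> exists l eps, Rlt 0 eps /\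
     forall z, S z -> (forall i, List.In i l -> Rlt (Rabs (Rminus (z i) (y i))) eps) -> U z) ->
 (forall y, S y -> exists U, Fam U /\ U y) ->
 exists L, (forall U, List.In U L -> Fam U) /\ forall y, S y -> exists U, List.In U L /\ U y.

Section CechPos.
Variable X : TopSpace.
Hypothesis cube : cube_stmt.
Hypothesis Hpc : pseudocompact X.

Let Ix := CX X.
Definition Sc (y : Ix -> R) : Prop :=
  forall (l : list Ix) eps, 0 < eps -> exists t, forall i, In i l -> Rabs (dm X t i - y i) < eps.

Definition Kpt := {y : Ix -> R | Sc y}.

Definition boxK (k : Kpt) (l : list Ix) (eps : R) (k' : Kpt) : Prop :=
  forall i, In i l -> Rabs (proj1_sig k' i - proj1_sig k i) < eps.

Definition isopenK (V : Kpt -> Prop) : Prop :=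
  forall k, V k -> exists l eps, 0 < eps /\ forall k', boxK k l eps k' -> V k'.

Lemma isopenK_full : isopenK (fun _ => True).
Proof. intros k _. exists nil, 1. split; [lra|]. intros; exact I. Qed.

Lemma isopenK_inter U V : isopenK U -> isopenK V -> isopenK (fun x => U x /\ V x).
Proof.
  intros HU HV k [Hk1 Hk2]. destruct (HU k Hk1) as [l1 [e1 [He1 H1]]]. destruct (HV k Hk2) as [l2 [e2 [He2 H2]]].
  exists (l1 ++ l2), (Rmin e1 e2). split; [apply Rmin_glb_lt; lra|].
  intros k' Hb. split.
  - apply H1. intros i Hi. assert (H := Hb i (in_or_app _ _ _ (or_introl Hi))). assert (Rmin e1 e2 <= e1) by apply Rmin_l. lra.
  - apply H2. intros i Hi. assert (H := Hb i (in_or_app _ _ _ (or_intror Hi))). assert (Rmin e1 e2 <= e2) by apply Rmin_r. lra.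
Qed.

Lemma isopenK_union (F : (Kpt -> Prop) -> Prop) : (forall U, F U -> isopenK U) ->
  isopenK (fun x => exists U, F U /\ U x).
Proof.
  intros HF k [U [HFU HUk]]. destruct (HF U HFU k HUk) as [l [eps [He H]]]. exists l, eps. split; [exact He|].
  intros k' Hb. exists U. split; [exact HFU|apply H; exact Hb].
Qed.

Definition Ksp : TopSpace := mkTop Kpt isopenK isopenK_full isopenK_inter isopenK_union.

Lemma Sc_e (t : Ix) : Sc (fun i => dm X t i).
Proof. intros l eps He. exists t. intros i _. unfold Rminus. rewrite Rplus_opp_r, Rabs_R0. exact He. Qed.

Definition eK (t : Ix) : Ksp := exist _ (fun i => dm X t i) (Sc_e t).

Lemma Sc_bounds y : Sc y -> forall i, 0 <= y i <= 1.
Proof.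
  intros Hy i. split.
  - apply Rnot_lt_le. intros Hlt. destruct (Hy (i :: nil) (- y i)) as [t Ht]; [lra|].
    specialize (Ht i (or_introl eq_refl)). assert (H0 := dm_nonneg X t i).
    assert (dm X t i - y i <= Rabs (dm X t i - y i)) by apply Rle_abs. lra.
  - apply Rnot_lt_le. intros Hlt. destruct (Hy (i :: nil) (y i - 1)) as [t Ht]; [lra|].
    specialize (Ht i (or_introl eq_refl)). assert (H0 := dm_le1 X t i).
    assert (- (dm X t i - y i) <= Rabs (dm X t i - y i)) by (rewrite <- Rabs_Ropp; apply Rle_abs). lra.
Qed.

Lemma Sc_closed y : (forall (l : list Ix) (eps : R), Rlt 0 eps ->
      exists z, Sc z /\ forall i, List.In i l -> Rlt (Rabs (Rminus (z i) (y i))) eps) -> Sc y.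
Proof.
  intros H l eps He. destruct (H l (eps / 2)) as [z [Hz Hzl]]; [lra|].
  destruct (Hz l (eps / 2)) as [t Ht]; [lra|]. exists t. intros i Hi.
  specialize (Ht i Hi). specialize (Hzl i Hi).
  replace (dm X t i - y i) with ((dm X t i - z i) + (z i - y i)) by ring.
  eapply Rle_lt_trans; [apply Rabs_triang|]. unfold Rminus in *. lra.
Qed.

Lemma sig_eq_K (k1 k2 : Kpt) : proj1_sig k1 = proj1_sig k2 -> k1 = k2.
Proof. destruct k1 as [y1 h1], k2 as [y2 h2]. simpl. intros ->. f_equal. apply proof_irrelevance. Qed.

Lemma Ksp_compact : Defs.compact Ksp.
Proof.
  intros Fam HFo HFc.
  set (lift := fun (U : Kpt -> Prop) (y : Ix -> R) => exists h : Sc y, U (exist _ y h)).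
  destruct (cube Ix Sc Sc_bounds Sc_closed (fun U' => exists U, Fam U /\ U' = lift U)) as [L' [HL' HL'c]].
  - intros U' [U [HFU ->]] y Sy [h Hh]. destruct (HFo U HFU _ Hh) as [l [eps [He Hb]]].
    exists l, eps. split; [exact He|]. intros z Sz Hz. exists Sz. apply Hb. intros i Hi. apply Hz. exact Hi.
  - intros y Sy. destruct (HFc (exist _ y Sy)) as [U [HFU HUy]]. exists (lift U). split; [exists U; auto|].
    exists Sy. exact HUy.
  - assert (Aux : forall L0, (forall U', In U' L0 -> exists U, Fam U /\ U' = lift U) ->
        exists L, (forall U, In U L -> Fam U) /\ forall U' y, In U' L0 -> U' y -> exists U, In U L /\ lift U y).
    { intros L0; induction L0 as [|U' L0 IH]; intros HL.
      - exists nil. split; [intros U []|intros U' y []].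
      - destruct IH as [L [HL1 HL2]]; [intros U'' H''; apply HL; right; exact H''|].
        destruct (HL U' (or_introl eq_refl)) as [U [HFU ->]].
        exists (U :: L). split.
        + intros U2 [<-|H2]; [exact HFU|apply HL1; exact H2].
        + intros U2 y [<-|H2] Hy.
          * exists U. split; [left; reflexivity|exact Hy].
          * destruct (HL2 U2 y H2 Hy) as [U3 [H3 H4]]. exists U3. split; [right; exact H3|exact H4]. }
    destruct (Aux L' HL') as [L [HL1 HL2]]. exists L. split; [exact HL1|].
    intros k. destruct (HL'c (proj1_sig k) (proj2_sig k)) as [U' [HU'L HU'k]].
    destruct (HL2 U' (proj1_sig k) HU'L HU'k) as [U [HUL [h Hh]]].
    exists U. split; [exact HUL|]. replace k with (exist Sc (proj1_sig k) h); [exact Hh|].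
    apply sig_eq_K. reflexivity.
Qed.

Lemma Ksp_hausdorff : hausdorff Ksp.
Proof.
  intros k1 k2 Hne.
  assert (Hi : exists i, proj1_sig k1 i <> proj1_sig k2 i).
  { apply NNPP. intros Hno. apply Hne. apply sig_eq_K. apply functional_extensionality. intros i.
    apply NNPP. intros H. apply Hno. exists i. exact H. }
  destruct Hi as [i Hi].
  set (r := Rabs (proj1_sig k1 i - proj1_sig k2 i) / 2).
  assert (Hr : 0 < r) by (unfold r; assert (0 < Rabs (proj1_sig k1 i - proj1_sig k2 i)) by (apply Rabs_pos_lt; lra); lra).
  exists (fun k : Kpt => Rabs (proj1_sig k i - proj1_sig k1 i) < r), (fun k : Kpt => Rabs (proj1_sig k i - proj1_sig k2 i) < r).
  split; [|split; [|split; [|split]]].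
  - intros k Hk. exists (i :: nil), (r - Rabs (proj1_sig k i - proj1_sig k1 i)). split; [lra|].
    intros k' Hb. specialize (Hb i (or_introl eq_refl)).
    replace (proj1_sig k' i - proj1_sig k1 i) with ((proj1_sig k' i - proj1_sig k i) + (proj1_sig k i - proj1_sig k1 i)) by ring.
    eapply Rle_lt_trans; [apply Rabs_triang|]. lra.
  - intros k Hk. exists (i :: nil), (r - Rabs (proj1_sig k i - proj1_sig k2 i)). split; [lra|].
    intros k' Hb. specialize (Hb i (or_introl eq_refl)).
    replace (proj1_sig k' i - proj1_sig k2 i) with ((proj1_sig k' i - proj1_sig k i) + (proj1_sig k i - proj1_sig k2 i)) by ring.
    eapply Rle_lt_trans; [apply Rabs_triang|]. lra.
  - simpl. unfold Rminus. rewrite Rplus_opp_r, Rabs_R0. exact Hr.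
  - simpl. unfold Rminus. rewrite Rplus_opp_r, Rabs_R0. exact Hr.
  - intros z [H1 H2].
    assert (Rabs (proj1_sig k1 i - proj1_sig k2 i) <= Rabs (proj1_sig z i - proj1_sig k1 i) + Rabs (proj1_sig z i - proj1_sig k2 i)).
    { replace (proj1_sig k1 i - proj1_sig k2 i) with (-(proj1_sig z i - proj1_sig k1 i) + (proj1_sig z i - proj1_sig k2 i)) by ring.
      eapply Rle_trans; [apply Rabs_triang|]. rewrite Rabs_Ropp. lra. }
    unfold r in *. lra.
Qed.

Lemma dm_diff_le (t t' i : Ix) : Rabs (dm X t' i - dm X t i) <= dm X t t'.
Proof.
  assert (H1 := dm_tri X t' t i). assert (H2 := dm_tri X t t' i). rewrite (dm_sym X t' t) in H1.
  apply Rabs_le. split; lra.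
Qed.

Lemma eK_cont (W : Ksp -> Prop) : isopen Ksp W -> Cm_open X (fun t => W (eK t)).
Proof.
  intros HW. apply (Cm_mopen X _ Hpc). intros t Ht. destruct (HW _ Ht) as [l [eps [He Hb]]].
  exists eps. split; [exact He|]. intros t' Ht'. apply Hb. intros i _. simpl.
  eapply Rle_lt_trans; [apply dm_diff_le|exact Ht'].
Qed.

Lemma boxK_single (t : Ix) (r : R) : isopen Ksp (fun k : Kpt => proj1_sig k t < r).
Proof.
  intros k Hk. exists (t :: nil), (r - proj1_sig k t). split; [lra|].
  intros k' Hb. specialize (Hb t (or_introl eq_refl)).
  assert (proj1_sig k' t - proj1_sig k t <= Rabs (proj1_sig k' t - proj1_sig k t)) by apply Rle_abs. lra.
Qed.

Theorem pc_cech : Cech_complete (CX X) (Cm_open X).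
Proof.
  exists Ksp, eK. split; [exact Ksp_compact|split; [exact Ksp_hausdorff|split; [|split; [|split; [|split]]]]].
  -
    intros t1 t2 H. apply (f_equal (fun k : Kpt => proj1_sig k t1)) in H. simpl in H.
    assert (dm X t1 t1 = 0) by (apply dm_zero; reflexivity). rewrite H0 in H.
    symmetry. apply dm_zero. symmetry. exact H.
  - exact eK_cont.
  -
    intros O HO. apply (Cm_mopen X _ Hpc) in HO.
    exists (fun k : Kpt => exists t r, 0 < r /\ (forall s, dm X t s < r -> O s) /\ proj1_sig k t < r).
    split.
    + apply open_local. intros k [t [r [Hr [Hball Hk]]]].
      exists (fun k : Kpt => proj1_sig k t < r). split; [apply boxK_single|split; [exact Hk|]].
      intros k' Hk'. exists t, r. auto.
    + intros t. split.
      * intros Ht. destruct (HO t Ht) as [r [Hr Hball]]. exists t, r. split; [exact Hr|split; [exact Hball|]].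
        simpl. assert (dm X t t = 0) by (apply dm_zero; reflexivity). lra.
      * intros [s [r [Hr [Hball Hs]]]]. apply Hball. simpl in Hs. rewrite dm_sym. exact Hs.
  -
    intros W HW [k Hk]. destruct (HW k Hk) as [l [eps [He Hb]]].
    destruct (proj2_sig k l eps He) as [t Ht]. exists t. apply Hb. intros i Hi. apply Ht. exact Hi.
  -
    exists (fun n k => exists V, isopen Ksp V /\ V k /\ forall a b, V (eK a) -> V (eK b) -> dm X a b < / (INR n + 1)).
    split.
    + intros n. apply open_local. intros k [V [HV [HVk HVd]]]. exists V. split; [exact HV|split; [exact HVk|]].
      intros k' Hk'. exists V. auto.
    + intros k. split.
      * intros Hk.
        set (Vf := fun n => proj1_sig (constructive_indefinite_description _ (Hk n))).
        assert (HVf : forall n, isopen Ksp (Vf n) /\ Vf n k /\ forall a b, Vf n (eK a) -> Vf n (eK b) -> dm X a b < / (INR n + 1)).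
        { intros n. exact (proj2_sig (constructive_indefinite_description _ (Hk n))). }
        set (Ui := fix Ui (n : nat) : Kpt -> Prop := match n with O => Vf O | S m => fun x => Ui m x /\ Vf (S m) x end).
        assert (HUi : forall n, isopen Ksp (Ui n) /\ Ui n k).
        { induction n; simpl; [split; apply HVf|]. split; [exact (isopenK_inter _ _ (proj1 IHn) (proj1 (HVf (S n))))|split; [apply IHn|apply HVf]]. }
        assert (HUV : forall n m x, le n m -> Ui m x -> Vf n x).
        { intros n m x Hnm. induction Hnm.
          - destruct n; simpl; [auto|tauto].
          - simpl. intros [H _]. auto. }
        assert (Hdn : forall (W : Kpt -> Prop), isopen Ksp W -> W k -> exists t, W (eK t)).
        { intros W HW HWk. destruct (HW k HWk) as [l [eps [He Hb]]].
          destruct (proj2_sig k l eps He) as [t Ht]. exists t. apply Hb. intros i Hi. apply Ht. exact Hi. }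
        assert (Hts : forall n, exists t, Ui n (eK t)) by (intros n; apply Hdn; apply HUi).
        set (ts := fun n => proj1_sig (constructive_indefinite_description _ (Hts n))).
        assert (Hts' : forall n, Ui n (eK (ts n))) by (intros n; exact (proj2_sig (constructive_indefinite_description _ (Hts n)))).
        assert (Hsmall : forall N eps, / (INR N + 1) <= eps -> forall m n, le N m -> le N n -> dm X (ts m) (ts n) < eps).
        { intros N eps HN m n Hm Hn. eapply Rlt_le_trans; [|exact HN].
          apply (proj2 (proj2 (HVf N))); [apply (HUV N m); auto|apply (HUV N n); auto]. }
        assert (Harch : forall eps, 0 < eps -> exists N, / (INR N + 1) <= eps).
        { intros eps He. destruct (exists_nat_ge (/ eps)) as [N HN]. exists N.
          assert (0 <= INR N) by apply pos_INR.
          rewrite <- (Rinv_inv eps). apply Rinv_le_contravar; [apply Rinv_0_lt_compat; exact He|lra]. }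
        destruct (dm_complete X ts) as [l Hl].
        { intros eps He. destruct (Harch (eps / 2)) as [N HN]; [lra|]. exists N. intros m n Hm Hn.
          assert (dm X (ts m) (ts n) < eps / 2) by (apply (Hsmall N); auto). lra. }
        exists l. apply NNPP. intros Hne.
        destruct (Ksp_hausdorff (eK l) k Hne) as [P [Q [HP [HQ [HPl [HQk Hdis]]]]]].
        assert (HPo := eK_cont P HP). apply (Cm_mopen X _ Hpc) in HPo.
        destruct (HPo l HPl) as [r [Hr Hball]].
        destruct (Hl (r / 2)) as [N1 HN1]; [lra|].
        destruct (Harch (r / 2)) as [N2 HN2]; [lra|].
        set (N := Nat.max N1 N2).
        destruct (Hdn (fun x => Q x /\ Ui N x)) as [s [HQs HUs]].
        { apply open_inter; [exact HQ|apply HUi]. }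
        { split; [exact HQk|apply HUi]. }
        assert (H1 : dm X s (ts N) < r / 2).
        { eapply Rlt_le_trans; [|exact HN2].
          apply (proj2 (proj2 (HVf N2))); [apply (HUV N2 N); [unfold N; lia|exact HUs]|apply (HUV N2 N); [unfold N; lia|apply Hts']]. }
        assert (H2 : dm X (ts N) l < r / 2) by (apply HN1; unfold N; lia).
        assert (H3 : dm X l s < r).
        { assert (H4 := dm_tri X l (ts N) s). rewrite (dm_sym X l (ts N)) in H4. rewrite (dm_sym X (ts N) s) in H4. lra. }
        apply (Hdis (eK s)). split; [apply Hball; exact H3|exact HQs].
      * intros [t <-] n. exists (fun k : Kpt => proj1_sig k t < / (3 * (INR n + 1))).
        assert (Hp : 0 < / (3 * (INR n + 1))) by (apply Rinv_0_lt_compat; assert (0 <= INR n) by apply pos_INR; lra).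
        split; [apply boxK_single|split].
        -- simpl. assert (dm X t t = 0) by (apply dm_zero; reflexivity). lra.
        -- intros a b Ha Hb. simpl in Ha, Hb.
           assert (H := dm_tri X a t b). rewrite (dm_sym X t b) in H.
           assert (E : / (INR n + 1) = 3 * / (3 * (INR n + 1))) by (field; assert (0 <= INR n) by apply pos_INR; lra).
           lra.
Qed.

End CechPos.


Lemma cube_ok : cube_stmt.
Proof. exact CubeM.cube_compact. Qed.

Theorem theorem2p2 (X : TopSpace) (HX : tychonoff X) :
  (strictly_Hbounded X (Cp_open X) <-> pseudocompact X) /\
  (Hbounded X (Cp_open X) <-> pseudocompact X) /\
  (strictly_Mbounded X (Cp_open X) <-> pseudocompact X) /\
  (Mbounded X (Cp_open X) <-> pseudocompact X) /\
  (first_countable (CX X) (Cm_open X) <-> pseudocompact X) /\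
  (strictly_Frechet_Urysohn (CX X) (Cm_open X) <-> pseudocompact X) /\
  (countable_strong_fan_tightness (CX X) (Cm_open X) <-> pseudocompact X) /\
  (countable_fan_tightness (CX X) (Cm_open X) <-> pseudocompact X) /\
  (countable_tightness (CX X) (Cm_open X) <-> pseudocompact X) /\
  (completely_metrizable (CX X) (Cm_open X) <-> pseudocompact X) /\
  (Cech_complete (CX X) (Cm_open X) <-> pseudocompact X) /\
  (hereditarily_Baire (CX X) (Cm_open X) <-> pseudocompact X).
Proof.
  pose proof cube_ok as cube.
  pose proof (Cm_open_inter X) as Hint.
  assert (ct_p := ct_pc X).
  assert (cft_p : countable_fan_tightness (CX X) (Cm_open X) -> pseudocompact X)
    by (intros H; apply ct_p; apply cft_ct; exact H).
  assert (csft_p : countable_strong_fan_tightness (CX X) (Cm_open X) -> pseudocompact X)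
    by (intros H; apply cft_p; apply csft_cft; exact H).
  assert (sFU_p : strictly_Frechet_Urysohn (CX X) (Cm_open X) -> pseudocompact X)
    by (intros H; apply csft_p; apply sFU_csft; exact H).
  assert (fc_p : first_countable (CX X) (Cm_open X) -> pseudocompact X)
    by (intros H; apply sFU_p; apply fc_sFU; [exact Hint|exact H]).
  assert (p_fc : pseudocompact X -> first_countable (CX X) (Cm_open X))
    by (intros H; apply cm_fc; apply pc_cm; exact H).
  assert (p_sFU : pseudocompact X -> strictly_Frechet_Urysohn (CX X) (Cm_open X))
    by (intros H; apply fc_sFU; [exact Hint|apply p_fc; exact H]).
  assert (p_csft : pseudocompact X -> countable_strong_fan_tightness (CX X) (Cm_open X))
    by (intros H; apply sFU_csft; apply p_sFU; exact H).
  assert (p_cft : pseudocompact X -> countable_fan_tightness (CX X) (Cm_open X))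
    by (intros H; apply csft_cft; apply p_csft; exact H).
  assert (p_ct : pseudocompact X -> countable_tightness (CX X) (Cm_open X))
    by (intros H; apply cft_ct; apply p_cft; exact H).
  assert (M_p := Mb_pc X).
  repeat split.
  - intros H. apply M_p. apply H_M. apply sH_H. exact H.
  - apply pc_sH.
  - intros H. apply M_p. apply H_M. exact H.
  - intros H. apply sH_H. apply pc_sH. exact H.
  - intros H. apply M_p. apply sM_M. exact H.
  - intros H. apply sH_sM. apply pc_sH. exact H.
  - exact M_p.
  - intros H. apply H_M. apply sH_H. apply pc_sH. exact H.
  - exact fc_p.
  - exact p_fc.
  - exact sFU_p.
  - exact p_sFU.
  - exact csft_p.
  - exact p_csft.
  - exact cft_p.
  - exact p_cft.
  - exact ct_p.
  - exact p_ct.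
  - intros H. apply fc_p. apply cm_fc. exact H.
  - apply pc_cm.
  - intros H. apply hB_pc. apply cech_hB. exact H.
  - intros H. apply pc_cech; assumption.
  - apply hB_pc.
  - intros H. apply cech_hB. apply pc_cech; assumption.
Qed.
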